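(* Let $m\ge1$ and $0<\alpha<\pi$, and set $h=E_m(2\alpha)$. Then $0<h<2$ and $\delta_m(h)=2\pi-2\alpha$.
   Context: $\Gamma$ is the unit circle of $\mathbb{C}$ with arc-length measure $|\cdot|$; $\mathfrak{P}_m(\Gamma)$ is the set of monic algebraic polynomials of degree $m$ all of whose zeros lie on $\Gamma$. For a compact set $Q\subset\Gamma$, $E_m(Q)=\inf\{\max_{z\in Q}|P(z)|:P\in\mathfrak{P}_m(\Gamma)\}$, and $E_m(2\alpha)=\inf\{E_m(Q):Q\subset\Gamma\text{ compact},|Q|=2\alpha\}$. $\mathbb{T}=[0,2\pi)$ with endpoints identified, with Lebesgue measure $\mathrm{mes}$, and for $0\le h\le2$, $\delta_m(h)=\inf\{\mathrm{mes}\{t\in\mathbb{T}:|P(e^{it})|\ge h\}:P\in\mathfrak{P}_m(\Gamma)\}$. *)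

(* Defs.v *)
From Stdlib Require Import Reals List.
Open Scope R_scope.

(* Points of C are represented as pairs (x, y) = x + i y. *)
Definition pt := (R * R)%type.

Definition on_circle (z : pt) : Prop := fst z ^ 2 + snd z ^ 2 = 1.

Definition cdist (z w : pt) : R :=
  sqrt ((fst z - fst w) ^ 2 + (snd z - snd w) ^ 2).

Definition cexp_i (t : R) : pt := (cos t, sin t).

(* A polynomial P in P_m(Gamma): P(z) = prod_k (z - e^{i th_k}), th a list of
   length m of arguments of the zeros. [Pabs ths z] is |P(z)| (the modulus of a
   product is the product of the moduli). *)
Definition Pabs (ths : list R) (z : pt) : R :=
  fold_right (fun th acc => cdist z (cexp_i th) * acc) 1 ths.

Definition in_Pm (m : nat) (ths : list R) : Prop := length ths = m.

Definition is_lower_bound (E : R -> Prop) (l : R) : Prop :=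
  forall x, E x -> l <= x.
Definition is_glb (E : R -> Prop) (l : R) : Prop :=
  is_lower_bound E l /\ (forall b, is_lower_bound E b -> b <= l).
Definition is_max (E : R -> Prop) (v : R) : Prop :=
  E v /\ (forall x, E x -> x <= v).

(* Lebesgue (outer) measure on R: infimum of total lengths of countable covers
   by open intervals. *)
Definition cover_sums (A : R -> Prop) (s : R) : Prop :=
  exists a b : nat -> R,
    (forall n, a n <= b n) /\
    (forall x, A x -> exists n, a n < x < b n) /\
    infinite_sum (fun n => b n - a n) s.
Definition lebesgue_measure (A : R -> Prop) (r : R) : Prop :=
  is_glb (cover_sums A) r.

(* Compact subsets of Gamma: closed subsets of R^2 contained in the unit circle
   (bounded automatically; Heine-Borel). *)
Definition closed2 (Q : pt -> Prop) : Prop :=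
  forall p, ~ Q p -> exists eps, 0 < eps /\
    forall q, (fst q - fst p) ^ 2 + (snd q - snd p) ^ 2 < eps ^ 2 -> ~ Q q.
Definition compact_in_circle (Q : pt -> Prop) : Prop :=
  (forall z, Q z -> on_circle z) /\ closed2 Q.

Definition arc_measure (Q : pt -> Prop) (r : R) : Prop :=
  lebesgue_measure (fun t => 0 <= t < 2 * PI /\ Q (cexp_i t)) r.

Definition E_Q (m : nat) (Q : pt -> Prop) (e : R) : Prop :=
  is_glb (fun v => exists ths, in_Pm m ths /\
                   is_max (fun x => exists z, Q z /\ x = Pabs ths z) v) e.

Definition E_alpha (m : nat) (alpha : R) (e : R) : Prop :=
  is_glb (fun v => exists Q, compact_in_circle Q /\ arc_measure Q (2 * alpha)
                              /\ E_Q m Q v) e.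

Definition delta (m : nat) (h : R) (d : R) : Prop :=
  is_glb (fun v => exists ths, in_Pm m ths /\
            lebesgue_measure (fun t => 0 <= t < 2 * PI /\
                                       Pabs ths (cexp_i t) >= h) v) d.

(* Main.v *)
Require Import Defs.
From Stdlib Require Import Reals List.
From Stdlib Require Import Lra Lia Ring ClassicalEpsilon Classical ZArith.
Require Import Defs.
Import ListNotations.
Open Scope R_scope.

Definition C := (R * R)%type.
Definition C0 : C := (0, 0).
Definition C1 : C := (1, 0).
Definition Cadd (x y : C) : C := (fst x + fst y, snd x + snd y).
Definition Cmul (x y : C) : C := (fst x * fst y - snd x * snd y, fst x * snd y + snd x * fst y).
Definition Copp (x : C) : C := (- fst x, - snd x).
Definition Csub (x y : C) : C := Cadd x (Copp y).

Lemma C_ring : ring_theory C0 C1 Cadd Cmul Csub Copp (@eq C).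
Proof.
  constructor; intros; repeat match goal with x : C |- _ => destruct x end;
  unfold Csub, Cadd, Cmul, Copp, C0, C1; simpl; f_equal; ring.
Qed.
Add Ring Cring : C_ring.
Arguments Cadd : simpl never.
Arguments Cmul : simpl never.
Arguments Copp : simpl never.
Arguments Csub : simpl never.

Lemma Cmul_integral : forall x y, Cmul x y = C0 -> x = C0 \/ y = C0.
Proof.
  intros [a b] [c d] H; unfold Cmul, C0 in *; simpl in *.
  injection H as H1 H2.
  destruct (Req_dec (a*a+b*b) 0) as [E|E].
  - left. pose proof (Rle_0_sqr a); pose proof (Rle_0_sqr b); unfold Rsqr in *.
    assert (Ha : a*a = 0) by lra. assert (Hb : b*b = 0) by lra.
    apply Rmult_integral in Ha; apply Rmult_integral in Hb.
    destruct Ha, Hb; subst; reflexivity.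
  - right. assert (Hc : (a*a+b*b)*c = a*(a*c-b*d) + b*(a*d+b*c)) by ring.
    assert (Hd : (a*a+b*b)*d = a*(a*d+b*c) - b*(a*c-b*d)) by ring.
    rewrite H1, H2, Rmult_0_r, Rmult_0_r, Rplus_0_r in Hc. rewrite H1, H2, Rmult_0_r, Rmult_0_r, Rminus_0_r in Hd.
    apply Rmult_integral in Hc; apply Rmult_integral in Hd.
    destruct Hc; [contradiction|]; destruct Hd; [contradiction|]; subst; reflexivity.
Qed.

Fixpoint Cpow (z : C) (k : nat) : C := match k with O => C1 | S k => Cmul z (Cpow z k) end.

(* polynomials: coefficient lists, low degree first *)
Fixpoint peval (p : list C) (z : C) : C :=
  match p with [] => C0 | a :: l => Cadd a (Cmul z (peval l z)) end.
Definition lead (p : list C) : C := last p C0.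

Fixpoint quot (p : list C) (r : C) : list C :=
  match p with [] => [] | a :: l => match l with [] => [] | _ :: _ => peval l r :: quot l r end end.

Lemma quot_spec : forall p r z, peval p z = Cadd (Cmul (Csub z r) (peval (quot p r) z)) (peval p r).
Proof.
  induction p as [|a l IH]; intros r z.
  - simpl. ring.
  - destruct l as [|b l'].
    + simpl. ring.
    + change (quot (a :: b :: l') r) with (peval (b :: l') r :: quot (b :: l') r).
      change (peval (a :: b :: l') z) with (Cadd a (Cmul z (peval (b::l') z))).
      change (peval (peval (b :: l') r :: quot (b :: l') r) z) with (Cadd (peval (b::l') r) (Cmul z (peval (quot (b::l') r) z))).
      change (peval (a :: b :: l') r) with (Cadd a (Cmul r (peval (b::l') r))).
      rewrite (IH r z). ring.
Qed.

Lemma quot_cons2 : forall a b l r, quot (a :: b :: l) r = peval (b :: l) r :: quot (b :: l) r.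
Proof. reflexivity. Qed.

Lemma quot_length : forall p r, length (quot p r) = pred (length p).
Proof.
  induction p as [|a l IH]; intros r; [reflexivity|].
  destruct l as [|b l']; [reflexivity|]. rewrite quot_cons2.
  change (S (length (quot (b::l') r)) = S (length l')). rewrite IH. reflexivity.
Qed.

Lemma lead_cons : forall a l, l <> [] -> lead (a :: l) = lead l.
Proof. intros a l H; unfold lead; destruct l; [contradiction|reflexivity]. Qed.

Lemma quot_lead : forall p r, (2 <= length p)%nat -> lead (quot p r) = lead p.
Proof.
  induction p as [|a l IH]; intros r H; simpl in H; [lia|].
  destruct l as [|b l']; simpl in H; [lia|].
  destruct l' as [|c l''].
  - rewrite quot_cons2. unfold lead; simpl. ring.
  - rewrite quot_cons2.
    rewrite lead_cons. 2:{ intro E. pose proof (quot_length (b::c::l'') r) as HL. rewrite E in HL. simpl in HL. lia. }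
    rewrite IH by (simpl; lia). rewrite lead_cons by discriminate. reflexivity.
Qed.

Lemma roots_bound : forall n p, length p = S n -> lead p <> C0 ->
  forall rs, NoDup rs -> (forall r, In r rs -> peval p r = C0) -> (length rs <= n)%nat.
Proof.
  induction n as [|n IH]; intros p Hl Hlead rs Hnd Hr.
  - destruct p as [|a [|b l]]; simpl in Hl; try lia.
    destruct rs as [|r rs]; simpl; [lia|].
    exfalso. apply Hlead. unfold lead; simpl. specialize (Hr r (or_introl eq_refl)).
    simpl in Hr. rewrite <- Hr. ring.
  - destruct rs as [|r rs]; simpl; [lia|].
    inversion Hnd as [|? ? Hnin Hnd']; subst.
    assert (length rs <= n)%nat; [|lia].
    apply (IH (quot p r)).
    + rewrite quot_length, Hl; reflexivity.
    + rewrite quot_lead by lia; exact Hlead.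
    + exact Hnd'.
    + intros r' Hin. pose proof (quot_spec p r r') as E.
      rewrite (Hr r' (or_intror Hin)), (Hr r (or_introl eq_refl)) in E.
      assert (E' : Cmul (Csub r' r) (peval (quot p r) r') = C0) by (rewrite E; ring).
      apply Cmul_integral in E'. destruct E' as [E'|E']; auto.
      exfalso. apply Hnin. replace r with r'; auto.
      transitivity (Cadd (Csub r' r) r); [ring|]. rewrite E'. ring.
Qed.

Definition prodlin (rs : list C) (z : C) : C := fold_right (fun r acc => Cmul (Csub z r) acc) C1 rs.

Lemma monic_factor : forall n p, length p = S n -> lead p = C1 ->
  forall rs, length rs = n -> NoDup rs -> (forall r, In r rs -> peval p r = C0) ->
  forall z, peval p z = prodlin rs z.
Proof.
  induction n as [|n IH]; intros p Hl Hlead rs Hlr Hnd Hr z.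
  - destruct p as [|a [|b l]]; simpl in Hl; try lia.
    destruct rs; simpl in Hlr; try lia. unfold lead in Hlead; simpl in Hlead. subst. simpl. unfold C1, C0, Cadd, Cmul; simpl. f_equal; ring.
  - destruct rs as [|r rs]; simpl in Hlr; [lia|].
    inversion Hnd as [|? ? Hnin Hnd']; subst.
    rewrite (quot_spec p r z), (Hr r (or_introl eq_refl)). simpl.
    rewrite (IH (quot p r)) with (rs := rs); auto.
    + unfold prodlin; simpl; ring.
    + rewrite quot_length, Hl; reflexivity.
    + rewrite quot_lead by lia; exact Hlead.
    + intros r' Hin. pose proof (quot_spec p r r') as E.
      rewrite (Hr r' (or_intror Hin)), (Hr r (or_introl eq_refl)) in E.
      assert (E' : Cmul (Csub r' r) (peval (quot p r) r') = C0) by (rewrite E; ring).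
      apply Cmul_integral in E'. destruct E' as [E'|E']; auto.
      exfalso. apply Hnin. replace r with r'; auto.
      transitivity (Cadd (Csub r' r) r); [ring|]. rewrite E'. ring.
Qed.

Fixpoint padd (p q : list C) : list C :=
  match p, q with [], _ => q | _, [] => p | a :: p', b :: q' => Cadd a b :: padd p' q' end.

Lemma padd_eval : forall p q z, peval (padd p q) z = Cadd (peval p z) (peval q z).
Proof. induction p; destruct q; intros; simpl; try rewrite IHp; ring. Qed.

Lemma padd_length : forall p q, length (padd p q) = max (length p) (length q).
Proof. induction p; destruct q; simpl; auto. Qed.

Lemma padd_lead_l : forall p q, (length q < length p)%nat -> lead (padd p q) = lead p.
Proof.
  induction p as [|a p IH]; intros q H; simpl in H; [lia|].
  destruct q as [|b q]; [reflexivity|]. simpl in H. simpl padd.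
  destruct p as [|c p]; simpl in H; [lia|].
  rewrite lead_cons. 2:{ intro E. pose proof (padd_length (c::p) q) as HL. rewrite E in HL. pose proof (Nat.le_max_l (length (c::p)) (length q)). simpl in *. lia. }
  rewrite IH by (simpl in *; lia). symmetry; apply lead_cons; discriminate.
Qed.

Lemma padd_lead_r : forall p q, (length p < length q)%nat -> lead (padd p q) = lead q.
Proof.
  induction p as [|a p IH]; intros q H; simpl in H; [reflexivity|].
  destruct q as [|b q]; simpl in H; [lia|]. simpl padd.
  destruct q as [|c q]; simpl in H; [lia|].
  rewrite lead_cons. 2:{ intro E. pose proof (padd_length p (c::q)) as HL. rewrite E in HL. pose proof (Nat.le_max_r (length p) (length (c::q))). simpl in *. lia. }
  rewrite IH by (simpl in *; lia). symmetry; apply lead_cons; discriminate.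
Qed.

Definition IsPoly (n : nat) (a : C) (g : C -> C) : Prop :=
  exists p, length p = S n /\ lead p = a /\ forall z, g z = peval p z.

Lemma IsPoly_root_bound : forall n a g, IsPoly n a g -> a <> C0 ->
  forall rs, NoDup rs -> (forall r, In r rs -> g r = C0) -> (length rs <= n)%nat.
Proof.
  intros n a g [p [Hl [Ha Hg]]] Hne rs Hnd Hr.
  apply (roots_bound n p Hl); [congruence|auto|].
  intros r Hin; rewrite <- Hg; auto.
Qed.

Lemma IsPoly_ext : forall n a g h, IsPoly n a g -> (forall z, g z = h z) -> IsPoly n a h.
Proof. intros n a g h [p [H1 [H2 H3]]] E. exists p; repeat split; auto. intro z; rewrite <- E; auto. Qed.

Lemma IsPoly_const : forall a, IsPoly 0 a (fun _ => a).
Proof. intros a; exists [a]; repeat split; intros; simpl. ring. Qed.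

Lemma map_length' : forall (f : C -> C) l, length (map f l) = length l.
Proof. intros; apply length_map. Qed.

Lemma lead_map : forall f l, l <> [] -> lead (map f l) = f (lead l).
Proof.
  intros f l; induction l as [|a l IH]; intros H; [contradiction|].
  destruct l as [|b l]; [reflexivity|].
  change (map f (a :: b :: l)) with (f a :: map f (b :: l)).
  rewrite lead_cons by discriminate. rewrite IH by discriminate.
  reflexivity.
Qed.

Lemma peval_scale : forall s p z, peval (map (Cmul s) p) z = Cmul s (peval p z).
Proof. induction p; intros; simpl; try rewrite IHp; ring. Qed.

Lemma IsPoly_scale : forall n a g s, IsPoly n a g -> IsPoly n (Cmul s a) (fun z => Cmul s (g z)).
Proof.
  intros n a g s [p [H1 [H2 H3]]]. exists (map (Cmul s) p); repeat split.
  - rewrite length_map; auto.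
  - rewrite lead_map; [congruence|]. intro E; subst; discriminate.
  - intro z; rewrite peval_scale, H3; reflexivity.
Qed.

Lemma IsPoly_mullin : forall n a g w, IsPoly n a g -> IsPoly (S n) a (fun z => Cmul (Csub z w) (g z)).
Proof.
  intros n a g w [p [H1 [H2 H3]]].
  exists (padd (C0 :: p) (map (Cmul (Copp w)) p)); repeat split.
  - rewrite padd_length, length_map. simpl. rewrite H1; first [apply Nat.max_l | f_equal; apply Nat.max_l]; lia.
  - rewrite padd_lead_l by (rewrite length_map; simpl; lia).
    rewrite lead_cons; [auto|]. intro E; subst; discriminate.
  - intro z. rewrite padd_eval, peval_scale, H3. simpl. ring.
Qed.

Lemma peval_mono : forall k b z, peval (repeat C0 k ++ [b]) z = Cmul b (Cpow z k).
Proof. induction k; intros; simpl; try rewrite IHk; ring. Qed.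

Lemma IsPoly_addlow : forall n a g k b, IsPoly n a g -> (k < n)%nat ->
  IsPoly n a (fun z => Cadd (g z) (Cmul b (Cpow z k))).
Proof.
  intros n a g k b [p [H1 [H2 H3]]] Hk.
  exists (padd p (repeat C0 k ++ [b])); repeat split.
  - rewrite padd_length, length_app, repeat_length; simpl. rewrite H1; first [apply Nat.max_l | f_equal; apply Nat.max_l]; lia.
  - rewrite padd_lead_l; auto. rewrite length_app, repeat_length; simpl; lia.
  - intro z; rewrite padd_eval, peval_mono, H3; reflexivity.
Qed.

Definition rC (r : R) : C := (r, 0).
Definition Cnorm2 (z : C) : R := fst z * fst z + snd z * snd z.

Lemma Cnorm2_mul : forall x y, Cnorm2 (Cmul x y) = Cnorm2 x * Cnorm2 y.
Proof. intros [a b] [c d]; unfold Cnorm2, Cmul; simpl; ring. Qed.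

Lemma Cnorm2_nonneg : forall x, 0 <= Cnorm2 x.
Proof. intros [a b]; unfold Cnorm2; simpl; nra. Qed.

Lemma rC_mul : forall x y, rC (x * y) = Cmul (rC x) (rC y).
Proof. intros; unfold rC, Cmul; simpl; f_equal; ring. Qed.

Lemma cdist_sq : forall z w, cdist z w ^ 2 = (fst z - fst w)^2 + (snd z - snd w)^2.
Proof. intros; unfold cdist; apply pow2_sqrt; apply Rplus_le_le_0_compat; apply pow2_ge_0. Qed.

Lemma cdist_nonneg : forall z w, 0 <= cdist z w.
Proof. intros; unfold cdist; apply sqrt_pos. Qed.

Lemma cdist_norm : forall z w, cdist z w = sqrt (Cnorm2 (Csub z w)).
Proof. intros [a b] [c d]; unfold cdist, Cnorm2, Csub, Cadd, Copp; simpl; f_equal; ring. Qed.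

Lemma on_circle_cexp : forall t, on_circle (cexp_i t).
Proof. intros t; unfold on_circle, cexp_i; simpl. pose proof (sin2_cos2 t); unfold Rsqr in *; nra. Qed.

Lemma circ_ident : forall z w, on_circle z -> on_circle w ->
  Cmul (Cmul z w) (rC (cdist z w ^ 2)) = Copp (Cmul (Csub z w) (Csub z w)).
Proof.
  intros z w H1 H2. rewrite cdist_sq. destruct z as [a b], w as [c d].
  unfold on_circle in *; cbn [fst snd] in *. unfold Cmul, Csub, Cadd, Copp, rC; cbn [fst snd]. f_equal.
  - assert (E: (a*c - b*d) * ((a+-c)^2+(b+-d)^2) - 0 * (a*d+b*c) - - ((a+-c)*(a+-c) - (b+-d)*(b+-d))
      = (a*c-b*d)*((a^2+b^2-1)+(c^2+d^2-1)) + (a^2+b^2-1)*(1-2*c^2) + (c^2+d^2-1)*(1-2*a^2) + 2*(a^2+b^2-1)*(c^2+d^2-1)) by ring.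
    rewrite H1, H2 in E. replace (a - c) with (a + - c) by ring. replace (b - d) with (b + - d) by ring. lra.
  - assert (E: (a*c - b*d) * 0 + (a*d+b*c) * ((a+-c)^2+(b+-d)^2) - - ((a+-c)*(b+-d) + (b+-d)*(a+-c))
      = (a*d+b*c)*((a^2+b^2-1)+(c^2+d^2-1)) - 2*c*d*(a^2+b^2-1) - 2*a*b*(c^2+d^2-1)) by ring.
    rewrite H1, H2 in E. replace (a - c) with (a + - c) by ring. replace (b - d) with (b + - d) by ring. lra.
Qed.

Definition Wprod (ws : list C) : C := fold_right Cmul C1 ws.

Lemma Pabs_cons : forall th ths z, Pabs (th :: ths) z = cdist z (cexp_i th) * Pabs ths z.
Proof. reflexivity. Qed.

Lemma Pabs_nonneg : forall ths z, 0 <= Pabs ths z.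
Proof.
  induction ths; intros z; simpl; [lra|]. apply Rmult_le_pos; [apply cdist_nonneg|apply IHths].
Qed.

Lemma Pabs_sq_ident : forall ths z, on_circle z ->
  Cmul (Cmul (Cpow z (length ths)) (Wprod (map cexp_i ths))) (rC (Pabs ths z ^ 2)) =
  Cmul (Cpow (Copp C1) (length ths)) (Cmul (prodlin (map cexp_i ths) z) (prodlin (map cexp_i ths) z)).
Proof.
  induction ths as [|th ths IH]; intros z Hz.
  - simpl. unfold rC, Cmul, C1; simpl; f_equal; ring.
  - rewrite Pabs_cons. simpl length. simpl map.
    change (Cpow z (S (length ths))) with (Cmul z (Cpow z (length ths))).
    change (Cpow (Copp C1) (S (length ths))) with (Cmul (Copp C1) (Cpow (Copp C1) (length ths))).
    change (Wprod (cexp_i th :: map cexp_i ths)) with (Cmul (cexp_i th) (Wprod (map cexp_i ths))).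
    change (prodlin (cexp_i th :: map cexp_i ths) z) with (Cmul (Csub z (cexp_i th)) (prodlin (map cexp_i ths) z)).
    replace ((cdist z (cexp_i th) * Pabs ths z) ^ 2) with (cdist z (cexp_i th) ^ 2 * Pabs ths z ^ 2) by ring.
    rewrite rC_mul.
    pose proof (circ_ident z (cexp_i th) Hz (on_circle_cexp th)) as E.
    pose proof (IH z Hz) as E2.
    transitivity (Cmul (Cmul (Cmul z (cexp_i th)) (rC (cdist z (cexp_i th) ^ 2)))
       (Cmul (Cmul (Cpow z (length ths)) (Wprod (map cexp_i ths))) (rC (Pabs ths z ^ 2)))); [ring|].
    rewrite E, E2. ring.
Qed.

Lemma IsPoly_prodlin : forall ws, IsPoly (length ws) C1 (prodlin ws).
Proof.
  induction ws as [|w ws IH].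
  - apply (IsPoly_ext 0 C1 (fun _ => C1)); [apply IsPoly_const|reflexivity].
  - apply (IsPoly_ext (S (length ws)) C1 (fun z => Cmul (Csub z w) (prodlin ws z))).
    + apply IsPoly_mullin; auto.
    + reflexivity.
Qed.

Lemma prodlin_app : forall l1 l2 z, prodlin (l1 ++ l2) z = Cmul (prodlin l1 z) (prodlin l2 z).
Proof. induction l1; intros; simpl; [ring|]. unfold prodlin in *; simpl. rewrite IHl1. ring. Qed.

Lemma Cpow_m1_sq : forall n, Cmul (Cpow (Copp C1) n) (Cpow (Copp C1) n) = C1.
Proof. induction n; simpl; [ring|]. transitivity (Cmul (Cmul (Copp C1) (Copp C1)) (Cmul (Cpow (Copp C1) n) (Cpow (Copp C1) n))); [ring|]. rewrite IHn. ring. Qed.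

Lemma C1_neq_C0 : C1 <> C0.
Proof. unfold C1, C0; intro H; injection H; lra. Qed.

Lemma Cpow_m1_neq0 : forall n, Cpow (Copp C1) n <> C0.
Proof. intros n E. pose proof (Cpow_m1_sq n) as H. rewrite E in H. apply C1_neq_C0. rewrite <- H. ring. Qed.

Definition levpoly (ths : list R) (c : R) (z : C) : C :=
  Cadd (Cmul (Cpow (Copp C1) (length ths)) (Cmul (prodlin (map cexp_i ths) z) (prodlin (map cexp_i ths) z)))
       (Cmul (Copp (Cmul (rC (c^2)) (Wprod (map cexp_i ths)))) (Cpow z (length ths))).

Lemma levpoly_IsPoly : forall ths c, (1 <= length ths)%nat ->
  IsPoly (length ths + length ths) (Cpow (Copp C1) (length ths)) (levpoly ths c).
Proof.
  intros ths c Hl. unfold levpoly.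
  apply IsPoly_addlow; [|lia].
  replace (Cpow (Copp C1) (length ths)) with (Cmul (Cpow (Copp C1) (length ths)) C1) at 1 by ring.
  apply IsPoly_scale.
  apply (IsPoly_ext _ _ (prodlin (map cexp_i ths ++ map cexp_i ths))).
  - replace (length ths + length ths)%nat with (length (map cexp_i ths ++ map cexp_i ths)) by (rewrite length_app, length_map; reflexivity). apply IsPoly_prodlin.
  - intros z; apply prodlin_app.
Qed.

Lemma levpoly_root : forall ths t, levpoly ths (Pabs ths (cexp_i t)) (cexp_i t) = C0.
Proof.
  intros ths t. unfold levpoly.
  rewrite <- (Pabs_sq_ident ths (cexp_i t) (on_circle_cexp t)). ring.
Qed.

Lemma cexp_inj : forall s t, 0 <= s < 2 * PI -> 0 <= t < 2 * PI -> cexp_i s = cexp_i t -> s = t.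
Proof.
  intros s t Hs Ht E. unfold cexp_i in E. injection E as Ec Es.
  assert (Hsin : sin (s - t) = 0) by (rewrite sin_minus, Ec, Es; ring).
  assert (Hcos : cos (s - t) = 1).
  { rewrite cos_minus, Ec, Es. pose proof (sin2_cos2 t); unfold Rsqr in *; lra. }
  destruct (sin_eq_0_0 _ Hsin) as [k Hk].
  pose proof PI_RGT_0.
  assert (Hk1 : IZR k < 2). { apply Rmult_lt_reg_r with PI; [lra|]. lra. }
  assert (Hk2 : -2 < IZR k). { apply Rmult_lt_reg_r with PI; [lra|]. lra. }
  apply lt_IZR in Hk1. apply lt_IZR in Hk2.
  assert (Hk3 : (k = 0 \/ k = 1 \/ k = -1)%Z) by lia. destruct Hk3 as [H0|[H0|H0]]; subst k.
  - simpl in Hk. lra.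
  - rewrite Hk in Hcos. simpl in Hcos. rewrite Rmult_1_l, cos_PI in Hcos. lra.
  - rewrite Hk in Hcos. simpl in Hcos. replace (-1 * PI) with (- PI) in Hcos by ring.
    rewrite cos_neg, cos_PI in Hcos. lra.
Qed.

Lemma NoDup_map_inj : forall {A B : Type} (f : A -> B) (P : A -> Prop) l,
  (forall x y, P x -> P y -> f x = f y -> x = y) -> (forall x, In x l -> P x) ->
  NoDup l -> NoDup (map f l).
Proof.
  intros A B f P l Hinj HP Hnd. induction Hnd as [|x l Hnin Hnd IH]; simpl; constructor.
  - intro Hin. apply in_map_iff in Hin. destruct Hin as [y [Ey Hy]].
    apply Hnin. replace x with y; auto. apply Hinj; auto; apply HP; simpl; auto.
  - apply IH. intros; apply HP; simpl; auto.
Qed.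

Lemma level_bound : forall ths c ts, (1 <= length ths)%nat -> NoDup ts ->
  (forall t, In t ts -> 0 <= t < 2 * PI /\ Pabs ths (cexp_i t) = c) ->
  (length ts <= length ths + length ths)%nat.
Proof.
  intros ths c ts Hl Hnd Hts.
  rewrite <- (length_map cexp_i ts).
  apply (IsPoly_root_bound _ _ _ (levpoly_IsPoly ths c Hl) (Cpow_m1_neq0 _)).
  - apply (NoDup_map_inj cexp_i (fun t => 0 <= t < 2 * PI)); auto.
    + intros; apply cexp_inj; auto.
    + intros x Hx; apply Hts; auto.
  - intros r Hr. apply in_map_iff in Hr. destruct Hr as [t [<- Ht]].
    destruct (Hts t Ht) as [_ Hc]. rewrite <- Hc. apply levpoly_root.
Qed.

Lemma de_moivre : forall n a, Cpow (cexp_i a) n = cexp_i (INR n * a).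
Proof.
  induction n as [|n IH]; intros a.
  - simpl. unfold cexp_i, C1. rewrite Rmult_0_l, cos_0, sin_0. reflexivity.
  - change (Cpow (cexp_i a) (S n)) with (Cmul (cexp_i a) (Cpow (cexp_i a) n)). rewrite IH.
    rewrite S_INR. unfold cexp_i, Cmul; simpl.
    replace ((INR n + 1) * a) with (a + INR n * a) by ring.
    rewrite cos_plus, sin_plus. f_equal; ring.
Qed.

Lemma Cpow_C1 : forall n, Cpow C1 n = C1.
Proof. induction n; simpl; [reflexivity|]. rewrite IHn. ring. Qed.

Definition ths0 (m : nat) : list R := map (fun k => 2 * PI * INR k / INR m) (seq 0 m).

Lemma ths0_length : forall m, length (ths0 m) = m.
Proof. intros; unfold ths0; rewrite length_map, length_seq; reflexivity. Qed.

Lemma Pabs_norm : forall ths z, Pabs ths z = sqrt (Cnorm2 (prodlin (map cexp_i ths) z)).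
Proof.
  induction ths as [|th ths IH]; intros z.
  - simpl. unfold Cnorm2, C1; simpl. replace (1*1+0*0) with 1 by ring. rewrite sqrt_1. reflexivity.
  - rewrite Pabs_cons, IH, cdist_norm. simpl map.
    change (prodlin (cexp_i th :: map cexp_i ths) z) with (Cmul (Csub z (cexp_i th)) (prodlin (map cexp_i ths) z)).
    rewrite Cnorm2_mul, sqrt_mult; auto using Cnorm2_nonneg.
Qed.

Lemma ths0_roots : forall m, (1 <= m)%nat -> forall z,
  Cadd (Cpow z m) (Cmul (Copp C1) (Cpow z 0)) = prodlin (map cexp_i (ths0 m)) z.
Proof.
  intros m Hm.
  assert (HP : IsPoly m C1 (fun z => Cadd (Cpow z m) (Cmul (Copp C1) (Cpow z 0)))).
  { apply IsPoly_addlow; [|lia].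
    apply (IsPoly_ext _ _ (prodlin (repeat C0 m))).
    - pose proof (IsPoly_prodlin (repeat C0 m)) as H. rewrite repeat_length in H. exact H.
    - intro z. induction m as [|m IHm]; [lia|]. destruct m as [|m].
      + simpl. unfold prodlin; simpl. ring.
      + simpl repeat. unfold prodlin; simpl. unfold prodlin in IHm. simpl in IHm. rewrite <- IHm by lia. ring. }
  destruct HP as [p [Hl [Hlead Hev]]].
  intros z. rewrite Hev. apply (monic_factor m p Hl Hlead).
  - rewrite length_map; apply ths0_length.
  - apply (NoDup_map_inj cexp_i (fun t => 0 <= t < 2 * PI)).
    + intros; apply cexp_inj; auto.
    + intros x Hx. unfold ths0 in Hx. apply in_map_iff in Hx. destruct Hx as [k [<- Hk]].
      apply in_seq in Hk. assert (Hm' : 0 < INR m) by (apply lt_0_INR; lia).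
      assert (Hk' : INR k < INR m) by (apply lt_INR; lia).
      pose proof PI_RGT_0. pose proof (pos_INR k). split.
      * apply Rmult_le_pos; [nra|]. left; apply Rinv_0_lt_compat; auto.
      * apply Rmult_lt_reg_r with (INR m); auto. unfold Rdiv. rewrite Rmult_assoc, Rinv_l by lra. nra.
    + unfold ths0. apply (NoDup_map_inj (fun k => 2 * PI * INR k / INR m) (fun _ => True)).
      * intros x y _ _ E. assert (Hm' : 0 < INR m) by (apply lt_0_INR; lia). pose proof PI_RGT_0.
        apply INR_eq. apply Rmult_eq_reg_l with (2 * PI / INR m); [|apply Rgt_not_eq; unfold Rdiv; apply Rmult_lt_0_compat; [lra|apply Rinv_0_lt_compat; lra]].
        unfold Rdiv in *. lra.
      * auto.
      * apply seq_NoDup.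
  - intros r Hr. rewrite <- Hev. apply in_map_iff in Hr. destruct Hr as [th [<- Hth]].
    unfold ths0 in Hth. apply in_map_iff in Hth. destruct Hth as [k [<- _]].
    rewrite de_moivre. assert (Hm' : 0 < INR m) by (apply lt_0_INR; lia).
    replace (INR m * (2 * PI * INR k / INR m)) with (INR k * (2 * PI)) by (field; lra).
    rewrite <- de_moivre. replace (cexp_i (2 * PI)) with C1.
    2:{ unfold cexp_i, C1; rewrite cos_2PI, sin_2PI; reflexivity. }
    rewrite Cpow_C1. simpl. ring.
Qed.

Lemma ths0_le2 : forall m, (1 <= m)%nat -> forall t, Pabs (ths0 m) (cexp_i t) <= 2.
Proof.
  intros m Hm t. rewrite Pabs_norm, <- ths0_roots by auto.
  rewrite de_moivre. simpl Cpow. unfold cexp_i, Cnorm2, Cadd, Cmul, Copp, C1; simpl.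
  set (a := INR m * t). pose proof (sin2_cos2 a). pose proof (COS_bound a). unfold Rsqr in *.
  rewrite <- (sqrt_pow2 2) by lra. apply sqrt_le_1_alt. nra.
Qed.

Lemma glb_exists : forall (E : R -> Prop), (exists x, E x) -> (exists b, is_lower_bound E b) ->
  exists l, is_glb E l.
Proof.
  intros E [x Ex] [b Hb].
  assert (Hub : bound (fun y => E (- y))).
  { exists (- b). intros y Hy. specialize (Hb _ Hy). lra. }
  assert (Hne : exists y, E (- y)) by (exists (- x); rewrite Ropp_involutive; auto).
  destruct (completeness _ Hub Hne) as [l [Hl1 Hl2]].
  exists (- l). split.
  - intros z Hz. assert (- z <= l) by (apply Hl1; rewrite Ropp_involutive; auto). lra.
  - intros c Hc. assert (l <= - c). { apply Hl2. intros y Hy. specialize (Hc _ Hy). lra. } lra.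
Qed.

Lemma glb_unique : forall E l1 l2, is_glb E l1 -> is_glb E l2 -> l1 = l2.
Proof.
  intros E l1 l2 [H1 H1'] [H2 H2']. apply Rle_antisym; [apply H2'|apply H1']; auto.
Qed.

Lemma glb_approx : forall E l, is_glb E l -> forall eps, 0 < eps -> exists x, E x /\ x < l + eps.
Proof.
  intros E l [H1 H2] eps Heps. apply NNPP. intro Hn.
  assert (is_lower_bound E (l + eps)).
  { intros x Ex. apply Rnot_lt_le. intro Hlt. apply Hn. exists x; auto. }
  specialize (H2 _ H). lra.
Qed.

Definition plen (a b : nat -> R) (n : nat) : R := b n - a n.

Lemma psum_growing : forall f, (forall n, 0 <= f n) -> Un_growing (sum_f_R0 f).
Proof. intros f Hf n. simpl. specialize (Hf (S n)). lra. Qed.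

Lemma psum_nonneg : forall f, (forall n, 0 <= f n) -> forall N, 0 <= sum_f_R0 f N.
Proof. intros f Hf N; induction N; simpl; [apply Hf|]. specialize (Hf (S N)); lra. Qed.

Lemma psum_le_lim : forall f s, (forall n, 0 <= f n) -> infinite_sum f s -> forall N, sum_f_R0 f N <= s.
Proof. intros f s Hf Hs N. apply growing_ineq; auto. apply psum_growing; auto. Qed.

Lemma psum_conv : forall f B, (forall n, 0 <= f n) -> (forall N, sum_f_R0 f N <= B) ->
  exists s, infinite_sum f s /\ s <= B.
Proof.
  intros f B Hf HB.
  destruct (growing_cv (sum_f_R0 f)) as [s Hs].
  - apply psum_growing; auto.
  - exists B. intros x [i ->]. apply HB.
  - exists s. split; [exact Hs|].
    apply Rle_cv_lim with (sum_f_R0 f) (fun _ => B); auto.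
    intros eps Heps. exists O. intros. unfold Rdist. rewrite Rminus_diag, Rabs_R0. auto.
Qed.

Lemma cover_sum_nonneg : forall A s, cover_sums A s -> 0 <= s.
Proof.
  intros A s [a [b [Hab [_ Hs]]]].
  apply Rle_trans with (sum_f_R0 (fun n => b n - a n) O).
  - simpl. specialize (Hab O). lra.
  - apply psum_le_lim; auto. intro n; specialize (Hab n); lra.
Qed.

Lemma cover_bound : forall A r (a b : nat -> R) B, lebesgue_measure A r ->
  (forall n, a n <= b n) -> (forall x, A x -> exists n, a n < x < b n) ->
  (forall N, sum_f_R0 (fun n => b n - a n) N <= B) -> r <= B.
Proof.
  intros A r a b B [Hr _] Hab Hcov HB.
  destruct (psum_conv (fun n => b n - a n) B) as [s [Hs HsB]]; auto.
  - intro n; specialize (Hab n); lra.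
  - apply Rle_trans with s; auto. apply Hr. exists a, b; auto.
Qed.

Lemma cover_approx : forall A r, lebesgue_measure A r -> forall eps, 0 < eps ->
  exists a b : nat -> R, (forall n, a n <= b n) /\ (forall x, A x -> exists n, a n < x < b n) /\
    (forall N, sum_f_R0 (fun n => b n - a n) N <= r + eps).
Proof.
  intros A r Hr eps Heps. destruct (glb_approx _ _ Hr eps Heps) as [s [[a [b [Hab [Hcov Hs]]]] Hlt]].
  exists a, b. repeat split; auto. intro N.
  apply Rle_trans with s; [|lra]. apply psum_le_lim; auto. intro n; specialize (Hab n); lra.
Qed.

Definition Bdd (A : R -> Prop) : Prop := exists lo hi, forall x, A x -> lo <= x <= hi.

Lemma sum_first_only : forall (f : nat -> R), (forall n, (n > 0)%nat -> f n = 0) -> forall N, sum_f_R0 f N = f O.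
Proof. intros f Hf N; induction N; simpl; auto. rewrite IHN, (Hf (S N)) by lia. ring. Qed.

Definition c1a (lo : R) (n : nat) : R := match n with O => lo | _ => 0 end.

Lemma cover_one_sum : forall lo hi N, sum_f_R0 (fun n => c1a hi n - c1a lo n) N = hi - lo.
Proof.
  intros lo hi N. rewrite (sum_first_only (fun n => c1a hi n - c1a lo n)); auto.
  intros [|n] Hn; [lia|]. simpl; ring.
Qed.

Lemma cover_one_le : forall lo hi, lo <= hi -> forall n, c1a lo n <= c1a hi n.
Proof. intros lo hi H [|n]; simpl; lra. Qed.

Lemma mes_exists : forall A, Bdd A -> exists r, lebesgue_measure A r.
Proof.
  intros A [lo [hi H]]. apply glb_exists.
  - set (a0 := lo - 1). set (b0 := Rmax lo hi + 1).
    assert (Hab : a0 <= b0) by (unfold a0, b0; pose proof (Rmax_l lo hi); lra).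
    destruct (psum_conv (fun n => c1a b0 n - c1a a0 n) (b0 - a0)) as [s [Hs _]].
    + intro n; pose proof (cover_one_le a0 b0 Hab n); lra.
    + intro N. rewrite cover_one_sum. lra.
    + exists s, (c1a a0), (c1a b0). repeat split; auto.
      * apply cover_one_le; auto.
      * intros x Ax. exists O. specialize (H x Ax). simpl. unfold a0, b0. pose proof (Rmax_r lo hi); lra.
  - exists 0. intros s Hs. eapply cover_sum_nonneg; eauto.
Qed.

Definition mu (A : R -> Prop) : R :=
  match excluded_middle_informative (exists r, lebesgue_measure A r) with
  | left H => proj1_sig (constructive_indefinite_description _ H)
  | right _ => 0 end.

Lemma mu_spec : forall A, Bdd A -> lebesgue_measure A (mu A).
Proof.
  intros A HA. unfold mu. destruct (excluded_middle_informative _) as [H|H].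
  - apply (proj2_sig (constructive_indefinite_description _ H)).
  - exfalso; apply H; apply mes_exists; auto.
Qed.

Lemma mu_unique : forall A r, lebesgue_measure A r -> mu A = r.
Proof.
  intros A r Hr. unfold mu. destruct (excluded_middle_informative _) as [H|H].
  - apply (glb_unique (cover_sums A)); auto. apply (proj2_sig (constructive_indefinite_description _ H)).
  - exfalso; apply H; eauto.
Qed.

Lemma mu_nonneg : forall A, Bdd A -> 0 <= mu A.
Proof.
  intros A HA. destruct (mu_spec A HA) as [_ H]. apply H. intros s Hs. eapply cover_sum_nonneg; eauto.
Qed.

Lemma Bdd_sub : forall A B, Bdd B -> (forall x, A x -> B x) -> Bdd A.
Proof. intros A B [lo [hi H]] Hs. exists lo, hi. auto. Qed.

Lemma Bdd_union : forall A B, Bdd A -> Bdd B -> Bdd (fun x => A x \/ B x).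
Proof.
  intros A B [l1 [h1 H1]] [l2 [h2 H2]]. exists (Rmin l1 l2), (Rmax h1 h2).
  intros x [Hx|Hx]; [specialize (H1 x Hx)|specialize (H2 x Hx)];
  pose proof (Rmin_l l1 l2); pose proof (Rmin_r l1 l2); pose proof (Rmax_l h1 h2); pose proof (Rmax_r h1 h2); lra.
Qed.

Lemma mu_mono : forall A B, Bdd B -> (forall x, A x -> B x) -> mu A <= mu B.
Proof.
  intros A B HB Hs. assert (HA : Bdd A) by (eapply Bdd_sub; eauto).
  destruct (mu_spec B HB) as [_ H]. apply H. intros s [a [b [Hab [Hcov Hsum]]]].
  destruct (mu_spec A HA) as [H1 _]. apply H1. exists a, b; repeat split; auto.
Qed.

Lemma mu_ext : forall A B, Bdd B -> (forall x, A x <-> B x) -> mu A = mu B.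
Proof.
  intros A B HB E. assert (HA : Bdd A) by (eapply Bdd_sub; eauto; intros; apply E; auto).
  apply Rle_antisym; apply mu_mono; auto; intros; apply E; auto.
Qed.

Lemma mu_le_interval : forall A lo hi, lo <= hi -> (forall x, A x -> lo <= x <= hi) -> mu A <= hi - lo.
Proof.
  intros A lo hi Hlh H. assert (HA : Bdd A) by (exists lo, hi; auto).
  apply Rnot_lt_le. intro Hlt. set (e := (mu A - (hi - lo)) / 4).
  assert (He : 0 < e) by (unfold e; lra).
  assert (mu A <= (hi + e) - (lo - e)).
  { apply (cover_bound A (mu A) (c1a (lo - e)) (c1a (hi + e))); auto.
    - apply mu_spec; auto.
    - apply cover_one_le; lra.
    - intros x Ax. exists O. simpl. specialize (H x Ax). lra.
    - intro N. rewrite cover_one_sum. lra. }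
  unfold e in H0. lra.
Qed.

Definition ileave (a1 a2 : nat -> R) (n : nat) : R :=
  if Nat.even n then a1 (Nat.div2 n) else a2 (Nat.div2 n).

Lemma ileave_even : forall a1 a2 k, ileave a1 a2 (2 * k) = a1 k.
Proof. intros; unfold ileave. rewrite Nat.even_even, Nat.div2_double. reflexivity. Qed.

Lemma ileave_odd : forall a1 a2 k, ileave a1 a2 (S (2 * k)) = a2 k.
Proof.
  intros; unfold ileave. rewrite Nat.even_succ, <- Nat.negb_even, Nat.even_even, Nat.div2_succ_double. reflexivity.
Qed.

Lemma ileave_sum : forall a1 b1 a2 b2 N,
  sum_f_R0 (fun n => ileave b1 b2 n - ileave a1 a2 n) (S (2 * N)) =
  sum_f_R0 (fun n => b1 n - a1 n) N + sum_f_R0 (fun n => b2 n - a2 n) N.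
Proof.
  intros. induction N.
  - simpl. change (ileave b1 b2 0 - ileave a1 a2 0 + (ileave b1 b2 1 - ileave a1 a2 1) = b1 0%nat - a1 0%nat + (b2 0%nat - a2 0%nat)).
    unfold ileave; simpl. ring.
  - replace (S (2 * S N)) with (S (S (S (2 * N)))) by lia.
    rewrite tech5, tech5, IHN. simpl sum_f_R0.
    replace (S (S (2 * N))) with (2 * S N)%nat by lia.
    replace (S (2 * S N)) with (S (2 * S N)) by lia.
    rewrite !ileave_even, !ileave_odd. ring.
Qed.

Lemma psum_mono_N : forall f, (forall n, 0 <= f n) -> forall N M, (N <= M)%nat -> sum_f_R0 f N <= sum_f_R0 f M.
Proof.
  intros f Hf N M H. induction H; [lra|]. simpl. specialize (Hf (S m)). lra.
Qed.

Lemma mu_union : forall A B, Bdd A -> Bdd B -> mu (fun x => A x \/ B x) <= mu A + mu B.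
Proof.
  intros A B HA HB. apply Rnot_lt_le. intro Hlt.
  set (e := (mu (fun x => A x \/ B x) - (mu A + mu B)) / 4). assert (He : 0 < e) by (unfold e; lra).
  destruct (cover_approx A (mu A) (mu_spec A HA) e He) as [a1 [b1 [H1 [C1 S1]]]].
  destruct (cover_approx B (mu B) (mu_spec B HB) e He) as [a2 [b2 [H2 [C2 S2]]]].
  assert (mu (fun x => A x \/ B x) <= mu A + e + (mu B + e)).
  { apply (cover_bound (fun x => A x \/ B x) _ (ileave a1 a2) (ileave b1 b2)).
    - apply mu_spec, Bdd_union; auto.
    - intro n. unfold ileave. destruct (Nat.even n); auto.
    - intros x [Ax|Bx].
      + destruct (C1 x Ax) as [n Hn]. exists (2 * n)%nat. rewrite !ileave_even. auto.
      + destruct (C2 x Bx) as [n Hn]. exists (S (2 * n)). rewrite !ileave_odd. auto.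
    - intro N. apply Rle_trans with (sum_f_R0 (fun n => ileave b1 b2 n - ileave a1 a2 n) (S (2 * N))).
      + apply psum_mono_N; [|lia]. intro n. unfold ileave. destruct (Nat.even n); [specialize (H1 (Nat.div2 n))|specialize (H2 (Nat.div2 n))]; lra.
      + rewrite ileave_sum. specialize (S1 N). specialize (S2 N). lra. }
  unfold e in H. lra.
Qed.

Definition sumlen (L : list (R * R)) : R := fold_right (fun p acc => (snd p - fst p) + acc) 0 L.

Lemma sumlen_app : forall L1 L2, sumlen (L1 ++ L2) = sumlen L1 + sumlen L2.
Proof. induction L1; intros; simpl; [ring|]. rewrite IHL1; ring. Qed.

Lemma sumlen_nonneg : forall L, (forall p, In p L -> fst p <= snd p) -> 0 <= sumlen L.
Proof.
  induction L as [|p L IH]; intros H; simpl; [lra|].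
  assert (fst p <= snd p) by (apply H; simpl; auto).
  assert (0 <= sumlen L) by (apply IH; intros; apply H; simpl; auto). lra.
Qed.

Lemma HB_finite : forall n L, (length L <= n)%nat -> (forall p, In p L -> fst p <= snd p) ->
  forall lo hi, (forall y, lo <= y <= hi -> exists p, In p L /\ fst p < y < snd p) -> hi - lo <= sumlen L.
Proof.
  induction n as [|n IH]; intros L Hl Hp lo hi Hc.
  - destruct L; simpl in Hl; [|lia].
    destruct (Rle_dec lo hi) as [H|H]; [|simpl; lra].
    destruct (Hc lo) as [p [[] _]]; lra.
  - destruct (Rle_dec lo hi) as [H|H]; [|pose proof (sumlen_nonneg L Hp); lra].
    destruct (Hc lo) as [[a b] [Hin Hab]]; [lra|]. simpl in Hab.
    destruct (in_split _ _ Hin) as [L1 [L2 ->]].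
    rewrite sumlen_app. simpl.
    assert (HL12 : 0 <= sumlen L1 + sumlen L2).
    { rewrite <- sumlen_app. apply sumlen_nonneg. intros q Hq. apply Hp. apply in_app_iff in Hq. apply in_app_iff. simpl. tauto. }
    destruct (Rlt_dec hi b) as [Hb|Hb]; [lra|].
    assert (hi - b <= sumlen (L1 ++ L2)).
    { apply (IH (L1 ++ L2)).
      - rewrite length_app in *. simpl in Hl. lia.
      - intros q Hq. apply Hp. apply in_app_iff in Hq. apply in_app_iff. simpl. tauto.
      - intros y Hy. destruct (Hc y) as [q [Hq Hqy]]; [lra|].
        exists q. split; auto. apply in_app_iff in Hq. apply in_app_iff. simpl in Hq.
        destruct Hq as [Hq|[Hq|Hq]]; auto. subst q. simpl in Hqy. lra. }
    rewrite sumlen_app in H0. lra.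
Qed.

Lemma ivfam_cond : forall (a b : nat -> R) x, (exists y, (fun x y => exists n, x = INR n /\ a n < y < b n) x y) ->
  (fun x => exists n : nat, x = INR n) x.
Proof. intros a b x [y [n [Hn _]]]. exists n; auto. Qed.

Definition ivfam (a b : nat -> R) : family :=
  mkfamily (fun x => exists n : nat, x = INR n) (fun x y => exists n, x = INR n /\ a n < y < b n) (ivfam_cond a b).

Lemma finite_subcover : forall (a b : nat -> R) lo hi,
  (forall y, lo <= y <= hi -> exists n, a n < y < b n) ->
  exists N, forall y, lo <= y <= hi -> exists n, (n <= N)%nat /\ a n < y < b n.
Proof.
  intros a b lo hi Hc.
  destruct (compact_P3 lo hi (ivfam a b)) as [D [Hcov [l Hl]]].
  - split.
    + intros y Hy. destruct (Hc y Hy) as [n Hn]. exists (INR n). simpl. exists n; auto.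
    + intros x y [n [Hx Hy]]. 
      assert (Hd : 0 < Rmin (y - a n) (b n - y)) by (apply Rmin_glb_lt; lra).
      exists (mkposreal _ Hd). intros z Hz. unfold disc in Hz. simpl in Hz. exists n. split; auto.
      pose proof (Rmin_l (y - a n) (b n - y)). pose proof (Rmin_r (y - a n) (b n - y)).
      apply Rabs_def2 in Hz. lra.
  - assert (HN : exists N, forall x, In x l -> x <= INR N).
    { clear Hl. induction l as [|x l IHl]. - exists O; intros x []. 
      - destruct IHl as [N1 HN1]. destruct (INR_unbounded x) as [N2 HN2].
        exists (max N1 N2). intros z [<-|Hz].
        + apply Rle_trans with (INR N2); [lra|]. apply le_INR; lia.
        + apply Rle_trans with (INR N1); auto. apply le_INR; lia. }
    destruct HN as [N HN]. exists N. intros y Hy.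
    destruct (Hcov y Hy) as [x [[n [Hxn Hn]] HD]].
    exists n. split; auto.
    assert (Hin : In x l). { apply Hl. split; auto. exists n; auto. }
    specialize (HN x Hin). subst x. apply INR_le; auto.
Qed.

Lemma sumlen_seq : forall (a b : nat -> R) N,
  sumlen (map (fun n => (a n, b n)) (seq 0 (S N))) = sum_f_R0 (fun n => b n - a n) N.
Proof.
  intros a b N. induction N.
  - simpl. ring.
  - rewrite seq_S, map_app, sumlen_app, IHN. simpl. ring.
Qed.

Lemma cover_sum_ge : forall A lo hi s, (forall y, lo <= y <= hi -> A y) -> cover_sums A s -> hi - lo <= s.
Proof.
  intros A lo hi s HA [a [b [Hab [Hcov Hs]]]].
  destruct (finite_subcover a b lo hi) as [N HN].
  - intros y Hy; apply Hcov, HA; auto.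
  - apply Rle_trans with (sum_f_R0 (fun n => b n - a n) N).
    + rewrite <- sumlen_seq. apply (HB_finite (length (map (fun n => (a n, b n)) (seq 0 (S N))))); auto.
      * intros p Hp. apply in_map_iff in Hp. destruct Hp as [n [<- _]]. simpl; auto.
      * intros y Hy. destruct (HN y Hy) as [n [Hn Hy']]. exists (a n, b n). split; auto.
        apply in_map_iff. exists n; split; auto. apply in_seq. lia.
    + apply psum_le_lim; auto. intro n; specialize (Hab n); lra.
Qed.

Lemma mu_ge_interval : forall A lo hi, Bdd A -> (forall y, lo <= y <= hi -> A y) -> hi - lo <= mu A.
Proof.
  intros A lo hi HA H. destruct (mu_spec A HA) as [_ Hg]. apply Hg. intros s Hs. eapply cover_sum_ge; eauto.
Qed.

Lemma minmax : forall x c, Rmin x c + Rmax x c = x + c.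
Proof. intros; unfold Rmin, Rmax; destruct (Rle_dec x c); lra. Qed.

Lemma mu_sep : forall A B c, Bdd A -> Bdd B -> (forall x, A x -> x < c) -> (forall x, B x -> c < x) ->
  mu A + mu B <= mu (fun x => A x \/ B x).
Proof.
  intros A B c HA HB HAc HBc.
  destruct (mu_spec _ (Bdd_union A B HA HB)) as [_ Hg]. apply Hg.
  intros s [a [b [Hab [Hcov Hs]]]].
  set (f1 := fun n => Rmin (b n) c - Rmin (a n) c).
  set (f2 := fun n => Rmax (b n) c - Rmax (a n) c).
  assert (Hf : forall n, f1 n + f2 n = b n - a n).
  { intro n. unfold f1, f2. pose proof (minmax (b n) c). pose proof (minmax (a n) c). lra. }
  assert (Hf1 : forall n, 0 <= f1 n).
  { intro n. unfold f1. pose proof (Rle_min_compat_r (a n) (b n) c (Hab n)). lra. }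
  assert (Hf2 : forall n, 0 <= f2 n).
  { intro n. unfold f2. pose proof (Rle_max_compat_r (a n) (b n) c (Hab n)). lra. }
  assert (Hsum : forall N, sum_f_R0 f1 N + sum_f_R0 f2 N = sum_f_R0 (fun n => b n - a n) N).
  { induction N; simpl; rewrite <- Hf; [ring|]. rewrite <- IHN. ring. }
  assert (HB1 : forall N, sum_f_R0 f1 N <= s).
  { intro N. pose proof (psum_nonneg f2 Hf2 N). pose proof (psum_le_lim (fun n => b n - a n) s ltac:(intro n; specialize (Hab n); lra) Hs N).
    rewrite <- Hsum in H0. lra. }
  assert (HB2 : forall N, sum_f_R0 f2 N <= s).
  { intro N. pose proof (psum_nonneg f1 Hf1 N). pose proof (psum_le_lim (fun n => b n - a n) s ltac:(intro n; specialize (Hab n); lra) Hs N).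
    rewrite <- Hsum in H0. lra. }
  destruct (psum_conv f1 s Hf1 HB1) as [s1 [Hs1 _]].
  destruct (psum_conv f2 s Hf2 HB2) as [s2 [Hs2 _]].
  assert (E : s1 + s2 = s).
  { apply (UL_sequence (sum_f_R0 (fun n => b n - a n))); auto.
    eapply Un_cv_ext; [|apply (CV_plus _ _ _ _ Hs1 Hs2)]. intro n. simpl. apply Hsum. }
  assert (mu A <= s1).
  { destruct (mu_spec A HA) as [H1 _]. apply H1. exists (fun n => Rmin (a n) c), (fun n => Rmin (b n) c).
    repeat split; auto.
    - intro n. apply Rle_min_compat_r. auto.
    - intros x Ax. destruct (Hcov x (or_introl Ax)) as [n Hn]. exists n. specialize (HAc x Ax).
      unfold Rmin. destruct (Rle_dec (a n) c), (Rle_dec (b n) c); lra. }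
  assert (mu B <= s2).
  { destruct (mu_spec B HB) as [H1 _]. apply H1. exists (fun n => Rmax (a n) c), (fun n => Rmax (b n) c).
    repeat split; auto.
    - intro n. apply Rle_max_compat_r. auto.
    - intros x Bx. destruct (Hcov x (or_intror Bx)) as [n Hn]. exists n. specialize (HBc x Bx).
      unfold Rmax. destruct (Rle_dec (a n) c), (Rle_dec (b n) c); lra. }
  lra.
Qed.

Lemma mu_finite : forall l, mu (fun x => In x l) = 0.
Proof.
  induction l as [|x l IH].
  - apply Rle_antisym; [|apply mu_nonneg; exists 0, 0; intros y []].
    assert (mu (fun x : R => In x []) <= 0 - 0) by (apply mu_le_interval; [lra|]; intros y []). lra.
  - assert (Hb : forall l, Bdd (fun y => In y l)).
    { induction l0 as [|z l0 IHl0]. - exists 0, 0; intros y [].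
      - destruct IHl0 as [lo [hi H]]. exists (Rmin z lo), (Rmax z hi). intros y [E|Hy].
        + subst z. pose proof (Rmin_l y lo); pose proof (Rmax_l y hi); lra.
        + specialize (H y Hy). pose proof (Rmin_r z lo); pose proof (Rmax_r z hi); lra. }
    apply Rle_antisym; [|apply mu_nonneg; auto].
    apply Rle_trans with (mu (fun y => y = x) + mu (fun y => In y l)).
    + rewrite (mu_ext (fun y => In y (x :: l)) (fun y => y = x \/ In y l)).
      * apply mu_union; auto. exists x, x; intros; lra.
      * apply Bdd_union; auto. exists x, x; intros; lra.
      * intro y; simpl; split; intros [H|H]; auto.
    + rewrite IH. assert (mu (fun y => y = x) <= x - x) by (apply mu_le_interval; intros; lra). lra.
Qed.

Lemma open_lt : forall c, open_set (fun y => y < c).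
Proof.
  intros c x Hx. assert (Hd : 0 < c - x) by lra. exists (mkposreal _ Hd).
  intros y Hy. unfold disc in Hy; simpl in Hy. apply Rabs_def2 in Hy. lra.
Qed.

Lemma closed_ext : forall D1 D2, closed_set D1 -> (forall x, D1 x <-> D2 x) -> closed_set D2.
Proof.
  intros D1 D2 H E. unfold closed_set in *. apply (open_set_P6 _ _ H).
  split; intros x Hx; unfold complementary in *; intro; apply Hx, E; auto.
Qed.

Lemma closed_ge : forall g c, continuity g -> closed_set (fun t => c <= g t).
Proof.
  intros g c Hg. unfold closed_set. apply (open_set_P6 (image_rec g (fun y => y < c))).
  - apply continuity_P2; auto. apply open_lt.
  - split; intros x Hx; unfold image_rec, complementary in *; lra.
Qed.

Lemma closed_inter : forall D1 D2, closed_set D1 -> closed_set D2 -> closed_set (fun x => D1 x /\ D2 x).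
Proof.
  intros D1 D2 H1 H2. unfold closed_set in *.
  apply (open_set_P6 (union_domain (complementary D1) (complementary D2))).
  - apply open_set_P2; auto.
  - split; intros x Hx; unfold union_domain, complementary in *; tauto.
Qed.

Lemma closed_true : closed_set (fun _ => True).
Proof.
  unfold closed_set. apply (open_set_P6 (fun _ => False)); [apply open_set_P4|].
  split; intros x Hx; unfold complementary in *; tauto.
Qed.

Lemma continuity_dist : forall z, continuity (fun t => Rabs (t - z)).
Proof.
  intros z. apply (continuity_comp (fun t => t - z) Rabs).
  - apply continuity_minus; [apply derivable_continuous, derivable_id|apply continuity_const; intros ? ?; reflexivity].
  - apply Rcontinuity_abs.
Qed.

Lemma closed_far : forall Z d, closed_set (fun t => forall z, In z Z -> d <= Rabs (t - z)).
Proof.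
  induction Z as [|z Z IH]; intros d.
  - apply (closed_ext _ _ closed_true). intros x; split; auto. intros _ z [].
  - apply (closed_ext (fun t => d <= Rabs (t - z) /\ (forall z', In z' Z -> d <= Rabs (t - z')))).
    + apply closed_inter; auto. apply closed_ge, continuity_dist.
    + intros x; split.
      * intros [H1 H2] z' [<-|Hz']; auto.
      * intros H; split; [apply H; simpl; auto|]. intros; apply H; simpl; auto.
Qed.

Lemma closed_interval : forall a b, closed_set (fun t => a <= t <= b).
Proof.
  intros a b. apply (closed_ext (fun t => a <= id t /\ -b <= - id t)).
  - apply closed_inter; apply closed_ge.
    + apply derivable_continuous, derivable_id.
    + apply continuity_opp. apply derivable_continuous, derivable_id.
  - intros x; unfold id; split; intros; lra.
Qed.

Lemma compact_max : forall K g, compact K -> (exists x, K x) -> continuity g ->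
  exists x0, K x0 /\ forall x, K x -> g x <= g x0.
Proof.
  intros K g HK [x Kx] Hg.
  assert (HY : compact (image_dir g K)) by (apply continuity_compact; auto).
  destruct (compact_P1 _ HY) as [lo [hi Hb]].
  assert (Hub : bound (image_dir g K)) by (exists hi; intros y Hy; apply Hb; auto).
  assert (Hne : exists y, image_dir g K y) by (exists (g x); exists x; auto).
  destruct (completeness _ Hub Hne) as [M [HM1 HM2]].
  assert (HMin : image_dir g K M).
  { apply (proj1 (closed_set_P1 _) (compact_P2 _ HY)).
    intros V [d Hd]. apply NNPP; intro Hn.
    assert (is_upper_bound (image_dir g K) (M - d)).
    { intros y Hy. apply Rnot_lt_le. intro Hlt. apply Hn. exists y. split; auto.
      apply Hd. unfold disc. specialize (HM1 y Hy). rewrite Rabs_left1; lra. }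
    specialize (HM2 _ H). destruct d; simpl in *; lra. }
  destruct HMin as [x0 [E Kx0]]. exists x0. split; auto.
  intros y Ky. rewrite <- E. apply HM1. exists y; auto.
Qed.

Lemma compact_min : forall K g, compact K -> (exists x, K x) -> continuity g ->
  exists x0, K x0 /\ forall x, K x -> g x0 <= g x.
Proof.
  intros K g HK Hne Hg. destruct (compact_max K (fun x => - g x) HK Hne) as [x0 [Kx0 H]].
  - apply continuity_opp in Hg. exact Hg.
  - exists x0; split; auto. intros x Kx; specialize (H x Kx); lra.
Qed.

Lemma mu_empty : forall A, (forall x, ~ A x) -> mu A = 0.
Proof.
  intros A H. rewrite <- (mu_finite []). apply mu_ext.
  - exists 0, 0; intros x [].
  - intros x; split; [intro Ax; exfalso; apply (H x Ax)|intros []].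
Qed.

Lemma mu_sep_list : forall Z A B, Bdd A -> Bdd B ->
  (forall x, A x -> ~ In x Z) -> (forall x, B x -> ~ In x Z) ->
  (forall x y, A x -> B y -> exists z, In z Z /\ ((x < z < y) \/ (y < z < x))) ->
  mu A + mu B <= mu (fun x => A x \/ B x).
Proof.
  induction Z as [|z Z IH]; intros A B HA HB HAZ HBZ Hsep.
  - destruct (classic (exists x, A x)) as [[x Ax]|HnA].
    + destruct (classic (exists y, B y)) as [[y By]|HnB].
      * destruct (Hsep x y Ax By) as [z [[] _]].
      * rewrite (mu_empty B) by (intros y By; apply HnB; eauto).
        rewrite Rplus_0_r. apply mu_mono; [apply Bdd_union; auto|]. auto.
    + rewrite (mu_empty A) by (intros y Ay; apply HnA; eauto).
      rewrite Rplus_0_l. apply mu_mono; [apply Bdd_union; auto|]. auto.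
  - set (A1 := fun x => A x /\ x < z). set (A2 := fun x => A x /\ z < x).
    set (B1 := fun x => B x /\ x < z). set (B2 := fun x => B x /\ z < x).
    assert (HA1 : Bdd A1) by (apply (Bdd_sub _ A); auto; intros x [H _]; auto).
    assert (HA2 : Bdd A2) by (apply (Bdd_sub _ A); auto; intros x [H _]; auto).
    assert (HB1 : Bdd B1) by (apply (Bdd_sub _ B); auto; intros x [H _]; auto).
    assert (HB2 : Bdd B2) by (apply (Bdd_sub _ B); auto; intros x [H _]; auto).
    assert (HAsplit : mu A <= mu A1 + mu A2).
    { apply Rle_trans with (mu (fun x => A1 x \/ A2 x)); [|apply mu_union; auto].
      apply mu_mono; [apply Bdd_union; auto|]. intros x Ax. unfold A1, A2.
      destruct (Rtotal_order x z) as [H|[H|H]]; auto. subst. exfalso; apply (HAZ z Ax); simpl; auto. }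
    assert (HBsplit : mu B <= mu B1 + mu B2).
    { apply Rle_trans with (mu (fun x => B1 x \/ B2 x)); [|apply mu_union; auto].
      apply mu_mono; [apply Bdd_union; auto|]. intros x Bx. unfold B1, B2.
      destruct (Rtotal_order x z) as [H|[H|H]]; auto. subst. exfalso; apply (HBZ z Bx); simpl; auto. }
    assert (H1 : mu A1 + mu B1 <= mu (fun x => A1 x \/ B1 x)).
    { apply IH; auto.
      - intros x [Ax _] Hx. apply (HAZ x Ax). simpl; auto.
      - intros x [Bx _] Hx. apply (HBZ x Bx). simpl; auto.
      - intros x y [Ax Hx] [By Hy]. destruct (Hsep x y Ax By) as [z' [[<-|Hz'] Hb]]; [lra|eauto]. }
    assert (H2 : mu A2 + mu B2 <= mu (fun x => A2 x \/ B2 x)).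
    { apply IH; auto.
      - intros x [Ax _] Hx. apply (HAZ x Ax). simpl; auto.
      - intros x [Bx _] Hx. apply (HBZ x Bx). simpl; auto.
      - intros x y [Ax Hx] [By Hy]. destruct (Hsep x y Ax By) as [z' [[<-|Hz'] Hb]]; [lra|eauto]. }
    assert (H3 : mu (fun x => A1 x \/ B1 x) + mu (fun x => A2 x \/ B2 x) <=
                 mu (fun x => (A1 x \/ B1 x) \/ (A2 x \/ B2 x))).
    { apply (mu_sep _ _ z); try (apply Bdd_union; auto).
      - intros x [[_ H]|[_ H]]; auto.
      - intros x [[_ H]|[_ H]]; auto. }
    assert (H4 : mu (fun x => (A1 x \/ B1 x) \/ (A2 x \/ B2 x)) <= mu (fun x => A x \/ B x)).
    { apply mu_mono; [apply Bdd_union; auto|]. unfold A1, A2, B1, B2. tauto. }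
    lra.
Qed.

Lemma Bdd_int : forall (P : R -> Prop) lo hi, Bdd (fun t => lo <= t <= hi /\ P t).
Proof. intros P lo hi. exists lo, hi. intros x [H _]; auto. Qed.

Lemma Bdd_int2 : forall (P : R -> Prop) lo hi, Bdd (fun t => lo <= t < hi /\ P t).
Proof. intros P lo hi. exists lo, hi. intros x [H _]; lra. Qed.

Lemma mu_nbhd : forall Z d lo hi, 0 < d ->
  mu (fun t => lo <= t <= hi /\ exists z, In z Z /\ Rabs (t - z) < d) <= 2 * d * INR (length Z).
Proof.
  induction Z as [|z Z IH]; intros d lo hi Hd.
  - rewrite mu_empty; [simpl; lra|]. intros x [_ [z [[] _]]].
  - apply Rle_trans with (mu (fun t => (z - d <= t <= z + d) \/ (lo <= t <= hi /\ exists z', In z' Z /\ Rabs (t - z') < d))).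
    + apply mu_mono.
      * apply Bdd_union; [exists (z - d), (z + d); auto|apply Bdd_int].
      * intros t [Ht [z' [[<-|Hz'] Hd']]].
        -- left. apply Rabs_def2 in Hd'. lra.
        -- right. split; eauto.
    + eapply Rle_trans; [apply mu_union; [exists (z - d), (z + d); auto|apply Bdd_int]|].
      pose proof (mu_le_interval (fun t => z - d <= t <= z + d) (z - d) (z + d) ltac:(lra) ltac:(auto)).
      specialize (IH d lo hi Hd). simpl length. rewrite S_INR. lra.
Qed.

Section Level.
Variable f : R -> R.
Hypothesis f_cont : continuity f.
Variable h : R.
Variable Z : list R.
Hypothesis Z_all : forall t, 0 <= t <= 2 * PI -> f t = h -> In t Z.

Lemma away : forall d, 0 < d -> exists eta, 0 < eta /\
  forall t, 0 <= t <= 2 * PI -> (forall z, In z Z -> d <= Rabs (t - z)) -> eta <= Rabs (f t - h).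
Proof.
  intros d Hd.
  set (K := fun t => (0 <= t <= 2 * PI) /\ (forall z, In z Z -> d <= Rabs (t - z))).
  destruct (classic (exists t, K t)) as [Hne|Hem].
  - assert (HK : compact K).
    { apply compact_P5.
      - apply closed_inter; [apply closed_interval|apply closed_far].
      - exists 0, (2 * PI). intros x [Hx _]; auto. }
    assert (Hg : continuity (fun t => Rabs (f t - h))).
    { apply (continuity_comp (fun t => f t - h) Rabs); [|apply Rcontinuity_abs].
      apply continuity_minus; auto. apply continuity_const; intros ? ?; reflexivity. }
    destruct (compact_min K _ HK Hne Hg) as [t0 [[Ht0 Hf0] Hmin]].
    exists (Rabs (f t0 - h)). split.
    + apply Rabs_pos_lt. intro E. assert (In t0 Z) by (apply Z_all; auto; lra).
      specialize (Hf0 t0 H). rewrite Rminus_diag, Rabs_R0 in Hf0. lra.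
    + intros t Ht Hfar. apply (Hmin t). split; auto.
  - exists 1. split; [lra|]. intros t Ht Hfar. exfalso. apply Hem. exists t. split; auto.
Qed.

Lemma mu_near : forall d, 0 < d -> exists eta, 0 < eta /\
  mu (fun t => 0 <= t <= 2 * PI /\ Rabs (f t - h) < eta) <= 2 * d * INR (length Z).
Proof.
  intros d Hd. destruct (away d Hd) as [eta [Heta Haway]].
  exists eta. split; auto.
  eapply Rle_trans; [|apply (mu_nbhd Z d 0 (2 * PI) Hd)].
  apply mu_mono; [apply Bdd_int|].
  intros t [Ht Hft]. split; auto. apply NNPP. intro Hn.
  assert (eta <= Rabs (f t - h)).
  { apply Haway; auto. intros z Hz. apply Rnot_lt_le. intro Hlt. apply Hn. eauto. }
  lra.
Qed.

Lemma mu_T : mu (fun t => 0 <= t < 2 * PI) <= 2 * PI.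
Proof.
  pose proof PI_RGT_0.
  assert (mu (fun t => 0 <= t < 2 * PI) <= 2 * PI - 0) by (apply mu_le_interval; intros; lra). lra.
Qed.

Lemma mu_T_ge : 2 * PI <= mu (fun t => 0 <= t < 2 * PI).
Proof.
  pose proof PI_RGT_0. apply Rnot_lt_le. intro Hlt.
  set (e := (2 * PI - mu (fun t => 0 <= t < 2 * PI)) / 2).
  assert (2 * PI - e - 0 <= mu (fun t => 0 <= t < 2 * PI)).
  { apply mu_ge_interval. - exists 0, (2 * PI); intros; lra.
    - intros y Hy. assert (0 < e). { unfold e. lra. } lra. }
  unfold e in H0. lra.
Qed.

Lemma level_ge_bound : forall a,
  (forall eta, 0 < eta -> a <= mu (fun t => 0 <= t < 2 * PI /\ f t <= h + eta)) ->
  mu (fun t => 0 <= t < 2 * PI /\ f t >= h) <= 2 * PI - a.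
Proof.
  intros a Ha.
  assert (H1 : a <= mu (fun t => 0 <= t < 2 * PI /\ f t < h)).
  { apply Rnot_lt_le. intro Hlt.
    set (g := mu (fun t => 0 <= t < 2 * PI /\ f t < h)).
    set (d := (a - g) / (4 * (INR (length Z) + 1))).
    assert (HL : 0 < INR (length Z) + 1) by (pose proof (pos_INR (length Z)); lra).
    assert (Hd : 0 < d) by (unfold d; apply Rdiv_lt_0_compat; [unfold g in *; lra|lra]).
    destruct (mu_near d Hd) as [eta [Heta Hmu]].
    specialize (Ha (eta / 2) ltac:(lra)).
    assert (Hsub : mu (fun t => 0 <= t < 2 * PI /\ f t <= h + eta / 2) <=
                   g + mu (fun t => 0 <= t <= 2 * PI /\ Rabs (f t - h) < eta)).
    { eapply Rle_trans; [|apply mu_union; [apply Bdd_int2|apply Bdd_int]].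
      apply mu_mono; [apply Bdd_union; [apply Bdd_int2|apply Bdd_int]|].
      intros t [Ht Hf]. destruct (Rlt_dec (f t) h); [left; auto|right].
      split; [lra|]. rewrite Rabs_right; lra. }
    assert (Hd2 : 2 * d * INR (length Z) < a - g).
    { unfold d. apply Rmult_lt_reg_r with (4 * (INR (length Z) + 1)); [lra|].
      field_simplify; [|lra]. pose proof (pos_INR (length Z)).
      assert (0 < a - g) by (unfold g in *; lra). nra. }
    unfold g in *. lra. }
  set (A := fun t => 0 <= t < 2 * PI /\ (f t < h /\ ~ In t Z)).
  set (B := fun t => 0 <= t < 2 * PI /\ (f t > h /\ ~ In t Z)).
  assert (HZ : Bdd (fun t => In t Z)).
  { clear. induction Z as [|z Z' IH]. - exists 0, 0; intros y [].
    - destruct IH as [lo [hi H]]. exists (Rmin z lo), (Rmax z hi). intros y [E|Hy].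
      + subst z. pose proof (Rmin_l y lo); pose proof (Rmax_l y hi); lra.
      + specialize (H y Hy). pose proof (Rmin_r z lo); pose proof (Rmax_r z hi); lra. }
  assert (HA : mu (fun t => 0 <= t < 2 * PI /\ f t < h) <= mu A).
  { eapply Rle_trans; [|rewrite <- (Rplus_0_r (mu A)); rewrite <- (mu_finite Z); apply mu_union; auto; apply Bdd_int2].
    apply mu_mono; [apply Bdd_union; auto; apply Bdd_int2|].
    intros t [Ht Hf]. destruct (classic (In t Z)); [right; auto|left; unfold A; auto]. }
  assert (HB : mu (fun t => 0 <= t < 2 * PI /\ f t >= h) <= mu B).
  { eapply Rle_trans; [|rewrite <- (Rplus_0_r (mu B)); rewrite <- (mu_finite Z); apply mu_union; auto; apply Bdd_int2].
    apply mu_mono; [apply Bdd_union; auto; apply Bdd_int2|].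
    intros t [Ht Hf]. destruct (classic (In t Z)); [right; auto|left; unfold B; split; auto; split; auto].
    destruct (Rle_lt_or_eq_dec h (f t)) as [Hlt|E]; [lra|auto|]. exfalso. apply H. apply Z_all; auto; lra. }
  assert (H2 : mu A + mu B <= mu (fun t => 0 <= t < 2 * PI)).
  { eapply Rle_trans; [apply (mu_sep_list Z)|].
    - apply Bdd_int2. - apply Bdd_int2.
    - intros x [Hx [Hf Hn]]; auto.
    - intros x [Hx [Hf Hn]]; auto.
    - intros x y [Hx [Hfx Hnx]] [Hy [Hfy Hny]].
      destruct (Rtotal_order x y) as [Hxy|[Hxy|Hxy]].
      + destruct (IVT (fun t => f t - h) x y) as [z [Hz Hfz]]; auto.
        * apply continuity_minus; auto. apply continuity_const; intros ? ?; reflexivity.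
        * lra. * lra.
        * exists z. assert (z <> x) by (intro; subst; lra). assert (z <> y) by (intro; subst; lra).
          split; [apply Z_all; lra|]. left; lra.
      + subst; lra.
      + destruct (IVT (fun t => h - f t) y x) as [z [Hz Hfz]]; auto.
        * apply continuity_minus; auto. apply continuity_const; intros ? ?; reflexivity.
        * lra. * lra.
        * exists z. assert (z <> x) by (intro; subst; lra). assert (z <> y) by (intro; subst; lra).
          split; [apply Z_all; lra|]. right; lra.
    - apply mu_mono; [exists 0, (2 * PI); intros; lra|]. intros x [[Hx _]|[Hx _]]; auto. }
  pose proof mu_T. lra.
Qed.
End Level.

Lemma lip_cont : forall g : R -> R, (forall x y, Rabs (g x - g y) <= Rabs (x - y)) -> continuity g.
Proof.
  intros g Hg x. unfold continuity_pt, continue_in, limit1_in, limit_in. intros eps Heps.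
  exists eps. split; auto. intros y [_ Hy]. simpl in *. unfold R_dist in *.
  eapply Rle_lt_trans; [apply Hg|]; auto.
Qed.

Lemma closed_le_id : forall s, closed_set (fun t => t <= s).
Proof.
  intros s. apply (closed_ext (fun t => -s <= - id t)).
  - apply closed_ge. apply continuity_opp. apply derivable_continuous, derivable_id.
  - intros x; unfold id; split; intros; lra.
Qed.

Lemma cut_exact : forall K a, closed_set K -> (forall t, K t -> 0 <= t <= 2 * PI) -> 0 < a -> a < mu K ->
  exists s, mu (fun t => K t /\ t <= s) = a.
Proof.
  intros K a HK Hb Ha HaK.
  assert (HBK : Bdd K) by (exists 0, (2 * PI); auto).
  set (phi := fun s => mu (fun t => K t /\ t <= s)).
  assert (Hmono : forall x y, x <= y -> phi x <= phi y).
  { intros x y Hxy. unfold phi. apply mu_mono; [eapply Bdd_sub; eauto; intros t [H _]; auto|].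
    intros t [Kt Ht]; split; auto; lra. }
  assert (Hlip : forall x y, x <= y -> phi y <= phi x + (y - x)).
  { intros x y Hxy. unfold phi.
    eapply Rle_trans; [|apply Rplus_le_compat_l; apply (mu_le_interval (fun t => x <= t <= y)); [lra|auto]].
    eapply Rle_trans; [|apply mu_union; [eapply Bdd_sub; eauto; intros t [H _]; auto|exists x, y; auto]].
    apply mu_mono. { apply Bdd_union; [eapply Bdd_sub; eauto; intros t [H _]; auto|exists x, y; auto]. }
    intros t [Kt Ht]. destruct (Rle_dec t x); [left; auto|right; lra]. }
  assert (Hc : continuity (fun s => phi s - a)).
  { apply continuity_minus; [|apply continuity_const; intros ? ?; reflexivity].
    apply lip_cont. intros x y. destruct (Rle_dec x y) as [Hxy|Hxy].
    - specialize (Hmono x y Hxy). specialize (Hlip x y Hxy).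
      rewrite Rabs_left1 by lra. rewrite Rabs_left1 by lra. lra.
    - assert (y <= x) by lra. specialize (Hmono y x H). specialize (Hlip y x H).
      rewrite Rabs_right by lra. rewrite Rabs_right by lra. lra. }
  assert (H0 : phi 0 <= 0).
  { unfold phi. assert (mu (fun t => K t /\ t <= 0) <= 0 - 0); [|lra].
    apply mu_le_interval; [lra|]. intros t [Kt Ht]. specialize (Hb t Kt). lra. }
  assert (H2 : phi (2 * PI) = mu K).
  { unfold phi. apply mu_ext; auto. intros t; split; [tauto|]. intros Kt; split; auto. apply Hb; auto. }
  pose proof PI_RGT_0.
  destruct (IVT (fun s => phi s - a) 0 (2 * PI) Hc) as [s [_ Hs]]; try lra.
  exists s. unfold phi in Hs. lra.
Qed.

Lemma inner_closed : forall f h Z, continuity f ->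
  (forall t, 0 <= t <= 2 * PI -> f t = h -> In t Z) ->
  forall a, a < mu (fun t => 0 <= t < 2 * PI /\ f t < h) ->
  exists K, closed_set K /\ (forall t, K t -> 0 <= t < 2 * PI) /\ (forall t, K t -> f t < h) /\ a < mu K.
Proof.
  intros f h Z Hf HZ a Ha. pose proof PI_RGT_0.
  set (g := mu (fun t => 0 <= t < 2 * PI /\ f t < h)).
  set (L := INR (length Z) + 1).
  assert (HL : 0 < L) by (unfold L; pose proof (pos_INR (length Z)); lra).
  set (d := (g - a) / (4 * L)).
  assert (Hd : 0 < d) by (unfold d; apply Rdiv_lt_0_compat; [unfold g in *; lra|lra]).
  destruct (mu_near f Hf h Z HZ d Hd) as [eta [Heta Hmu]].
  set (e := Rmin ((g - a) / 4) PI).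
  assert (He : 0 < e) by (unfold e; apply Rmin_glb_lt; [unfold g in *; lra|lra]).
  assert (He1 : e <= (g - a) / 4) by apply Rmin_l.
  assert (He2 : e <= PI) by apply Rmin_r.
  exists (fun t => (0 <= t <= 2 * PI - e) /\ (eta / 2 - h) <= - f t).
  split; [|split; [|split]].
  - apply closed_inter; [apply closed_interval|]. apply closed_ge. apply continuity_opp; auto.
  - intros t [Ht _]; lra.
  - intros t [_ Ht]; lra.
  - assert (Hsub : g <= mu (fun t => (0 <= t <= 2 * PI - e) /\ (eta / 2 - h) <= - f t) +
        (mu (fun t => 0 <= t <= 2 * PI /\ Rabs (f t - h) < eta) + mu (fun t => 2 * PI - e <= t <= 2 * PI))).
    { eapply Rle_trans; [|apply Rplus_le_compat_l; apply mu_union; [apply Bdd_int|exists (2*PI - e), (2 * PI); auto]].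
      eapply Rle_trans; [|apply mu_union; [apply Bdd_int|apply Bdd_union; [apply Bdd_int|exists (2*PI - e), (2 * PI); auto]]].
      apply mu_mono. { apply Bdd_union; [apply Bdd_int|apply Bdd_union; [apply Bdd_int|exists (2*PI - e), (2 * PI); auto]]. }
      intros t [Ht Hft]. destruct (Rle_dec t (2 * PI - e)) as [Hte|Hte]; [|right; right; lra].
      destruct (Rle_dec (f t) (h - eta / 2)) as [Hfe|Hfe]; [left; split; lra|].
      right; left; split; [lra|]. rewrite Rabs_left; lra. }
    assert (mu (fun t => 2 * PI - e <= t <= 2 * PI) <= 2 * PI - (2 * PI - e)) by (apply mu_le_interval; [lra|auto]).
    assert (Hd2 : 2 * d * INR (length Z) <= (g - a) / 2).
    { unfold d. unfold L in *. pose proof (pos_INR (length Z)).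
      apply Rmult_le_reg_r with (4 * (INR (length Z) + 1)); [lra|].
      field_simplify; [|lra]. assert (0 < g - a) by (unfold g in *; lra). nra. }
    unfold g in *. lra.
Qed.

Definition F (ths : list R) (t : R) : R := Pabs ths (cexp_i t).

Lemma cont_const : forall c, continuity (fun _ => c).
Proof. intros c; apply continuity_const; intros ? ?; reflexivity. Qed.

Lemma cont_sq : forall g, continuity g -> continuity (fun t => g t ^ 2).
Proof.
  intros g Hg. apply (continuity_comp g (fun y => y ^ 2)); auto.
  apply derivable_continuous, (derivable_pow 2).
Qed.

Lemma F_cont : forall ths, continuity (F ths).
Proof.
  induction ths as [|th ths IH]; unfold F; simpl.
  - apply cont_const.
  - apply continuity_mult; [|apply IH].
    intro t. unfold cdist, cexp_i; simpl.
    apply (continuity_pt_comp (fun t => (cos t - cos th) ^ 2 + (sin t - sin th) ^ 2) sqrt).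
    + apply continuity_plus; apply cont_sq; apply continuity_minus;
        try apply cont_const; [apply continuity_cos|apply continuity_sin].
    + apply continuity_pt_sqrt. apply Rplus_le_le_0_compat; apply pow2_ge_0.
Qed.

Lemma F_nonneg : forall ths t, 0 <= F ths t.
Proof. intros; apply Pabs_nonneg. Qed.

Lemma maximal_list : forall (P : R -> Prop) N,
  (forall l, NoDup l -> (forall x, In x l -> P x) -> (length l <= N)%nat) ->
  exists l, forall x, P x -> In x l.
Proof.
  intros P N HN.
  assert (H : forall k l, NoDup l -> (forall x, In x l -> P x) -> (N - length l <= k)%nat ->
                exists l', forall x, P x -> In x l').
  { induction k as [|k IH]; intros l Hnd Hl Hk.
    - exists l. intros x Px. apply NNPP. intro Hn.
      assert (length (x :: l) <= N)%nat.
      { apply HN. constructor; auto. intros y [<-|Hy]; auto. }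
      simpl in H. lia.
    - destruct (classic (forall x, P x -> In x l)) as [Hall|Hn]; [exists l; auto|].
      apply not_all_ex_not in Hn. destruct Hn as [x Hx].
      apply imply_to_and in Hx. destruct Hx as [Px Hnin].
      apply (IH (x :: l)).
      + constructor; auto.
      + intros y [<-|Hy]; auto.
      + assert (length (x :: l) <= N)%nat. { apply HN. constructor; auto. intros y [<-|Hy]; auto. }
        simpl in *. lia. }
  apply (H N []); simpl; auto. constructor. intros x []. lia.
Qed.

Lemma F_2PI : forall ths, F ths (2 * PI) = F ths 0.
Proof. intros; unfold F, cexp_i. rewrite cos_2PI, sin_2PI, cos_0, sin_0. reflexivity. Qed.

Lemma zero_list : forall ths h, (1 <= length ths)%nat ->
  exists Z, forall t, 0 <= t <= 2 * PI -> F ths t = h -> In t Z.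
Proof.
  intros ths h Hl.
  destruct (maximal_list (fun t => 0 <= t < 2 * PI /\ F ths t = h) (length ths + length ths)) as [l Hlist].
  - intros l Hnd Hall. apply (level_bound ths h l Hl Hnd). intros t Ht; apply Hall; auto.
  - exists (l ++ [2 * PI]). intros t Ht Hf. apply in_app_iff.
    destruct (Rlt_dec t (2 * PI)); [left; apply Hlist; split; auto; lra|right; left; lra].
Qed.

Definition Qof (K : R -> Prop) : pt -> Prop := fun z => exists t, K t /\ z = cexp_i t.

Lemma Qof_compact : forall K, closed_set K -> (forall t, K t -> 0 <= t < 2 * PI) -> compact_in_circle (Qof K).
Proof.
  intros K HK Hb. split.
  - intros z [t [_ ->]]. apply on_circle_cexp.
  - intros p Hp. destruct (classic (exists t, K t)) as [Hne|Hem].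
    + assert (HKc : compact K).
      { apply compact_P5; auto. exists 0, (2 * PI). intros x Kx; specialize (Hb x Kx); lra. }
      set (g := fun t => (cos t - fst p) ^ 2 + (sin t - snd p) ^ 2).
      assert (Hg : continuity g).
      { unfold g. apply continuity_plus; apply cont_sq; apply continuity_minus;
        try apply cont_const; [apply continuity_cos|apply continuity_sin]. }
      destruct (compact_min K g HKc Hne Hg) as [t0 [Kt0 Hmin]].
      assert (Hpos : 0 < g t0).
      { unfold g. destruct (Rlt_dec 0 ((cos t0 - fst p) ^ 2 + (sin t0 - snd p) ^ 2)) as [H|H]; auto.
        exfalso. apply Hp. exists t0. split; auto.
        assert (E1 : (cos t0 - fst p) ^ 2 = 0) by (pose proof (pow2_ge_0 (cos t0 - fst p)); pose proof (pow2_ge_0 (sin t0 - snd p)); lra).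
        assert (E2 : (sin t0 - snd p) ^ 2 = 0) by (pose proof (pow2_ge_0 (cos t0 - fst p)); pose proof (pow2_ge_0 (sin t0 - snd p)); lra).
        simpl in E1, E2. rewrite Rmult_1_r in E1, E2. apply Rmult_integral in E1. apply Rmult_integral in E2.
        assert (cos t0 - fst p = 0) by (destruct E1; auto). assert (sin t0 - snd p = 0) by (destruct E2; auto).
        destruct p as [p1 p2]. unfold cexp_i. simpl in *. f_equal; lra. }
      exists (sqrt (g t0)). split; [apply sqrt_lt_R0; auto|].
      intros q Hq [t [Kt ->]]. rewrite pow2_sqrt in Hq by lra.
      specialize (Hmin t Kt). unfold g, cexp_i in *. simpl in Hq.
      assert (E : (cos t - fst p) ^ 2 + (sin t - snd p) ^ 2 = (fst p - cos t) ^ 2 + (snd p - sin t) ^ 2) by ring.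
      lra.
    + exists 1. split; [lra|]. intros q _ [t [Kt _]]. apply Hem; eauto.
Qed.

Lemma Qof_arc : forall K, (forall t, K t -> 0 <= t < 2 * PI) -> arc_measure (Qof K) (mu K).
Proof.
  intros K Hb. unfold arc_measure.
  assert (HS : Bdd (fun t => 0 <= t < 2 * PI /\ Qof K (cexp_i t))) by apply Bdd_int2.
  pose proof (mu_spec _ HS) as H.
  replace (mu K) with (mu (fun t => 0 <= t < 2 * PI /\ Qof K (cexp_i t))); auto.
  apply mu_ext; [exists 0, (2 * PI); intros x Kx; specialize (Hb x Kx); lra|].
  intros t; split.
  - intros [Ht [s [Ks E]]]. replace t with s; auto. apply cexp_inj; auto.
  - intros Kt; split; [auto|]. exists t; auto.
Qed.

Lemma Qof_max : forall K ths, closed_set K -> (forall t, K t -> 0 <= t < 2 * PI) -> (exists t, K t) ->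
  exists t0, K t0 /\ is_max (fun x => exists z, Qof K z /\ x = Pabs ths z) (F ths t0).
Proof.
  intros K ths HK Hb Hne.
  assert (HKc : compact K).
  { apply compact_P5; auto. exists 0, (2 * PI). intros x Kx; specialize (Hb x Kx); lra. }
  destruct (compact_max K (F ths) HKc Hne (F_cont ths)) as [t0 [Kt0 Hmax]].
  exists t0. split; auto. split.
  - exists (cexp_i t0). split; [exists t0; auto|reflexivity].
  - intros x [z [[t [Kt ->]] ->]]. apply (Hmax t Kt).
Qed.

Lemma E_Q_exists : forall m K ths, closed_set K -> (forall t, K t -> 0 <= t < 2 * PI) -> (exists t, K t) ->
  length ths = m ->
  exists e, E_Q m (Qof K) e /\ 0 <= e /\ exists t0, K t0 /\ e <= F ths t0.
Proof.
  intros m K ths HK Hb Hne Hl.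
  destruct (Qof_max K ths HK Hb Hne) as [t0 [Kt0 Hmax]].
  destruct (glb_exists (fun v => exists ths, in_Pm m ths /\
                   is_max (fun x => exists z, Qof K z /\ x = Pabs ths z) v)) as [e He].
  - exists (F ths t0), ths. split; auto.
  - exists 0. intros v [ths' [_ [[z [[t [Kt Ez]] Hv]] _]]]. subst. apply Pabs_nonneg.
  - exists e. split; [exact He|]. split.
    + destruct He as [_ He]. apply He. intros v [ths' [_ [[z [[t [Kt Ez]] Hv]] _]]]. subst. apply Pabs_nonneg.
    + exists t0. split; auto. destruct He as [He _]. apply He. exists ths. split; auto.
Qed.

Lemma cosZ : forall x (j : Z), cos (x + 2 * PI * IZR j) = cos x.
Proof.
  intros x j. destruct (Z.le_gt_cases 0 j) as [Hj|Hj].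
  - destruct (Z_of_nat_complete _ Hj) as [n ->]. rewrite <- INR_IZR_INZ.
    replace (2 * PI * INR n) with (2 * INR n * PI) by ring. apply cos_period.
  - assert (Hj' : (0 <= - j)%Z) by lia. destruct (Z_of_nat_complete _ Hj') as [n En].
    replace j with (- Z.of_nat n)%Z by lia. rewrite opp_IZR, <- INR_IZR_INZ.
    rewrite <- (cos_period (x + 2 * PI * - INR n) n). f_equal. ring.
Qed.

Lemma floor_Z : forall u, exists j : Z, IZR j <= u < IZR j + 1.
Proof.
  intros u. exists (up u - 1)%Z. rewrite minus_IZR. pose proof (archimed u). simpl. lra.
Qed.

Lemma near_mult : forall x d, 0 < d < PI -> cos d < cos x -> exists j : Z, Rabs (x - 2 * PI * IZR j) < d.
Proof.
  intros x d Hd Hc. pose proof PI_RGT_0.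
  destruct (floor_Z ((x + PI) / (2 * PI))) as [j [Hj1 Hj2]].
  exists j. set (y := x - 2 * PI * IZR j).
  assert (Hy : - PI <= y < PI).
  { unfold y. apply Rmult_le_compat_r with (r := 2 * PI) in Hj1; [|lra].
    apply Rmult_lt_compat_r with (r := 2 * PI) in Hj2; [|lra].
    unfold Rdiv in *. rewrite Rmult_assoc, Rinv_l in Hj1, Hj2 by lra. lra. }
  assert (Hcy : cos y = cos x).
  { unfold y. rewrite <- (cosZ (x - 2 * PI * IZR j) j). f_equal. ring. }
  destruct (Rle_dec 0 y) as [H0|H0].
  - rewrite Rabs_right by lra. apply Rnot_le_lt. intro Hle.
    destruct (Rle_lt_or_eq_dec _ _ Hle) as [Hlt|Heq].
    + pose proof (cos_decreasing_1 d y ltac:(lra) ltac:(lra) ltac:(lra) ltac:(lra) Hlt). lra.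
    + rewrite Heq in Hc. lra.
  - rewrite Rabs_left by lra. apply Rnot_le_lt. intro Hle. rewrite <- cos_neg in Hcy.
    destruct (Rle_lt_or_eq_dec _ _ Hle) as [Hlt|Heq].
    + pose proof (cos_decreasing_1 d (- y) ltac:(lra) ltac:(lra) ltac:(lra) ltac:(lra) Hlt). lra.
    + rewrite Heq in Hc. lra.
Qed.

Lemma cdist_cexp : forall t th, cdist (cexp_i t) (cexp_i th) ^ 2 = 2 - 2 * cos (t - th).
Proof.
  intros. rewrite cdist_sq. unfold cexp_i; simpl. rewrite cos_minus.
  pose proof (sin2_cos2 t); pose proof (sin2_cos2 th). unfold Rsqr in *. nra.
Qed.

Lemma prod_ge : forall ths t s, 0 <= s -> (forall th, In th ths -> s <= cdist (cexp_i t) (cexp_i th)) ->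
  s ^ (length ths) <= F ths t.
Proof.
  induction ths as [|th ths IH]; intros t s Hs H; unfold F; simpl; [lra|].
  apply Rmult_le_compat; auto.
  - apply pow_le; auto.
  - apply H; simpl; auto.
  - apply IH; auto. intros; apply H; simpl; auto.
Qed.

Lemma mu_N : forall th d, 0 < d < PI ->
  mu (fun t => 0 <= t <= 2 * PI /\ exists j : Z, Rabs (t - th - 2 * PI * IZR j) < d) <= 6 * d.
Proof.
  intros th d Hd. pose proof PI_RGT_0.
  destruct (floor_Z (th / (2 * PI))) as [j0 [Hj1 Hj2]].
  set (th' := th - 2 * PI * IZR j0).
  assert (Hth : 0 <= th' < 2 * PI).
  { unfold th'. apply Rmult_le_compat_r with (r := 2 * PI) in Hj1; [|lra].
    apply Rmult_lt_compat_r with (r := 2 * PI) in Hj2; [|lra].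
    unfold Rdiv in *. rewrite Rmult_assoc, Rinv_l in Hj1, Hj2 by lra. lra. }
  set (I1 := fun t => th' - 2 * PI - d <= t <= th' - 2 * PI + d).
  set (I2 := fun t => th' - d <= t <= th' + d).
  set (I3 := fun t => th' + 2 * PI - d <= t <= th' + 2 * PI + d).
  assert (B1 : Bdd I1) by (exists (th' - 2 * PI - d), (th' - 2 * PI + d); auto).
  assert (B2 : Bdd I2) by (exists (th' - d), (th' + d); auto).
  assert (B3 : Bdd I3) by (exists (th' + 2 * PI - d), (th' + 2 * PI + d); auto).
  apply Rle_trans with (mu (fun t => I1 t \/ (I2 t \/ I3 t))).
  - apply mu_mono; [apply Bdd_union; auto; apply Bdd_union; auto|].
    intros t [Ht [j Hj]]. set (k := (j + j0)%Z).
    assert (Hk : Rabs (t - th' - 2 * PI * IZR k) < d).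
    { unfold k, th'. rewrite plus_IZR. replace (t - (th - 2 * PI * IZR j0) - 2 * PI * (IZR j + IZR j0)) with (t - th - 2 * PI * IZR j) by ring. auto. }
    apply Rabs_def2 in Hk.
    assert (Hk1 : IZR k < 2). { apply Rmult_lt_reg_l with (2 * PI); [lra|]. lra. }
    assert (Hk2 : -2 < IZR k). { apply Rmult_lt_reg_l with (2 * PI); [lra|]. lra. }
    apply lt_IZR in Hk1. apply lt_IZR in Hk2.
    assert (Hk3 : (k = -1 \/ k = 0 \/ k = 1)%Z) by lia.
    destruct Hk3 as [E|[E|E]]; rewrite E in Hk; simpl in Hk.
    + left. unfold I1. lra.
    + right; left. unfold I2. lra.
    + right; right. unfold I3. lra.
  - eapply Rle_trans; [apply mu_union; auto; apply Bdd_union; auto|].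
    eapply Rle_trans; [apply Rplus_le_compat_l; apply mu_union; auto|].
    assert (mu I1 <= (th' - 2 * PI + d) - (th' - 2 * PI - d)) by (apply mu_le_interval; [lra|auto]).
    assert (mu I2 <= (th' + d) - (th' - d)) by (apply mu_le_interval; [lra|auto]).
    assert (mu I3 <= (th' + 2 * PI + d) - (th' + 2 * PI - d)) by (apply mu_le_interval; [lra|auto]).
    lra.
Qed.

Lemma mu_N_list : forall ths d, 0 < d < PI ->
  mu (fun t => 0 <= t <= 2 * PI /\ exists th, In th ths /\ exists j : Z, Rabs (t - th - 2 * PI * IZR j) < d)
   <= 6 * d * INR (length ths).
Proof.
  induction ths as [|th ths IH]; intros d Hd.
  - rewrite mu_empty; [simpl; lra|]. intros t [_ [th [[] _]]].
  - eapply Rle_trans; [apply (mu_mono _ (fun t => (0 <= t <= 2 * PI /\ exists j : Z, Rabs (t - th - 2 * PI * IZR j) < d) \/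
        (0 <= t <= 2 * PI /\ exists th', In th' ths /\ exists j : Z, Rabs (t - th' - 2 * PI * IZR j) < d)))|].
    + apply Bdd_union; apply Bdd_int.
    + intros t [Ht [th' [[<-|Hin] Hj]]]; [left|right]; eauto.
    + eapply Rle_trans; [apply mu_union; apply Bdd_int|].
      pose proof (mu_N th d Hd). specialize (IH d Hd). simpl length. rewrite S_INR. lra.
Qed.

Lemma small_sub : forall m, (1 <= m)%nat -> forall eps, 0 < eps -> exists r, 0 < r /\
  forall ths, length ths = m -> mu (fun t => 0 <= t < 2 * PI /\ F ths t < r) <= eps.
Proof.
  intros m Hm eps Heps. pose proof PI_RGT_0.
  assert (HmR : 0 < INR m) by (apply lt_0_INR; lia).
  set (d := Rmin (PI / 2) (eps / (6 * INR m))).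
  assert (Hd : 0 < d) by (unfold d; apply Rmin_glb_lt; [lra|apply Rdiv_lt_0_compat; lra]).
  assert (Hd1 : d <= PI / 2) by apply Rmin_l.
  assert (Hd2 : d <= eps / (6 * INR m)) by apply Rmin_r.
  assert (Hcd : cos d < 1).
  { rewrite <- cos_0. apply cos_decreasing_1; lra. }
  set (s := sqrt (2 - 2 * cos d)).
  assert (Hs : 0 < s) by (apply sqrt_lt_R0; lra).
  exists (s ^ m). split; [apply pow_lt; auto|].
  intros ths Hl.
  eapply Rle_trans; [apply (mu_mono _ (fun t => 0 <= t <= 2 * PI /\ exists th, In th ths /\ exists j : Z, Rabs (t - th - 2 * PI * IZR j) < d))|].
  - apply Bdd_int.
  - intros t [Ht Hf]. split; [lra|]. apply NNPP. intro Hn.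
    assert (s ^ length ths <= F ths t).
    { apply prod_ge; [lra|]. intros th Hth. apply Rnot_lt_le. intro Hlt. apply Hn. exists th. split; auto.
      assert (Hc : cos d < cos (t - th)).
      { pose proof (cdist_cexp t th) as Hc1.
        assert (Hc2 : cdist (cexp_i t) (cexp_i th) ^ 2 < s ^ 2).
        { pose proof (cdist_nonneg (cexp_i t) (cexp_i th)). simpl. nra. }
        unfold s in Hc2. rewrite pow2_sqrt in Hc2 by lra. lra. }
      destruct (near_mult (t - th) d ltac:(lra) Hc) as [j Hj]. exists j.
      replace (t - th - 2 * PI * IZR j) with (t - th - 2 * PI * IZR j) by ring. auto. }
    rewrite Hl in H0. lra.
  - eapply Rle_trans; [apply mu_N_list; lra|]. rewrite Hl.
    apply Rmult_le_reg_r with (/ (INR m)); [apply Rinv_0_lt_compat; auto|].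
    rewrite Rmult_assoc, Rinv_r by lra. unfold Rdiv in Hd2.
    rewrite Rinv_mult in Hd2. lra.
Qed.

Lemma cdist_triangle : forall z u w, cdist z w <= cdist z u + cdist u w.
Proof.
  intros [z1 z2] [u1 u2] [w1 w2]. unfold cdist; cbn [fst snd].
  set (a1 := z1 - u1). set (a2 := z2 - u2). set (b1 := u1 - w1). set (b2 := u2 - w2).
  replace (z1 - w1) with (a1 + b1) by (unfold a1, b1; ring).
  replace (z2 - w2) with (a2 + b2) by (unfold a2, b2; ring).
  assert (HA : 0 <= a1 ^ 2 + a2 ^ 2) by nra. assert (HB : 0 <= b1 ^ 2 + b2 ^ 2) by nra.
  assert (Hcs : a1 * b1 + a2 * b2 <= sqrt (a1 ^ 2 + a2 ^ 2) * sqrt (b1 ^ 2 + b2 ^ 2)).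
  { rewrite <- sqrt_mult by auto.
    destruct (Rle_dec (a1 * b1 + a2 * b2) 0) as [H|H]; [pose proof (sqrt_pos ((a1 ^ 2 + a2 ^ 2) * (b1 ^ 2 + b2 ^ 2))); lra|].
    rewrite <- (sqrt_pow2 (a1 * b1 + a2 * b2)) by lra. apply sqrt_le_1_alt.
    assert (0 <= (a1 * b2 - a2 * b1) ^ 2) by apply pow2_ge_0. nra. }
  pose proof (sqrt_pos (a1 ^ 2 + a2 ^ 2)). pose proof (sqrt_pos (b1 ^ 2 + b2 ^ 2)).
  rewrite <- (sqrt_pow2 (sqrt (a1 ^ 2 + a2 ^ 2) + sqrt (b1 ^ 2 + b2 ^ 2))) by lra.
  apply sqrt_le_1_alt.
  replace ((sqrt (a1 ^ 2 + a2 ^ 2) + sqrt (b1 ^ 2 + b2 ^ 2)) ^ 2) with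
    (sqrt (a1 ^ 2 + a2 ^ 2) ^ 2 + sqrt (b1 ^ 2 + b2 ^ 2) ^ 2 + 2 * (sqrt (a1 ^ 2 + a2 ^ 2) * sqrt (b1 ^ 2 + b2 ^ 2))) by ring.
  rewrite !pow2_sqrt by auto. nra.
Qed.

Lemma cdist_sym : forall z w, cdist z w = cdist w z.
Proof. intros [a b] [c d]; unfold cdist; simpl; f_equal; ring. Qed.

Lemma cdist_circle_le2 : forall t th, cdist (cexp_i t) (cexp_i th) <= 2.
Proof.
  intros t th. pose proof (cdist_cexp t th). pose proof (COS_bound (t - th)).
  pose proof (cdist_nonneg (cexp_i t) (cexp_i th)). nra.
Qed.

Fixpoint sumd (l1 l2 : list R) : R :=
  match l1, l2 with a :: l1', b :: l2' => cdist (cexp_i a) (cexp_i b) + sumd l1' l2' | _, _ => 0 end.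

Lemma sumd_nonneg : forall l1 l2, 0 <= sumd l1 l2.
Proof. induction l1; destruct l2; simpl; try lra. pose proof (cdist_nonneg (cexp_i a) (cexp_i r)). pose proof (IHl1 l2). lra. Qed.

Lemma F_le_pow : forall ths t, F ths t <= 2 ^ length ths.
Proof.
  induction ths as [|th ths IH]; intros t; unfold F in *; simpl; [lra|].
  apply Rmult_le_compat; [apply cdist_nonneg|apply Pabs_nonneg|apply cdist_circle_le2|apply IH].
Qed.

Lemma F_unif : forall l1 l2, length l1 = length l2 -> forall t,
  Rabs (F l1 t - F l2 t) <= 2 ^ length l1 * sumd l1 l2.
Proof.
  induction l1 as [|a l1 IH]; intros [|b l2] Hl t; simpl in Hl; try lia.
  - unfold F; simpl. rewrite Rminus_diag, Rabs_R0. lra.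
  - injection Hl as Hl. unfold F; simpl. fold (F l1 t). fold (F l2 t).
    set (x := cdist (cexp_i t) (cexp_i a)). set (y := cdist (cexp_i t) (cexp_i b)).
    assert (Hxy : Rabs (x - y) <= cdist (cexp_i a) (cexp_i b)).
    { unfold x, y. apply Rabs_le. split.
      - pose proof (cdist_triangle (cexp_i t) (cexp_i a) (cexp_i b)). lra.
      - pose proof (cdist_triangle (cexp_i t) (cexp_i b) (cexp_i a)). rewrite (cdist_sym (cexp_i b)) in H. lra. }
    replace (x * F l1 t - y * F l2 t) with ((x - y) * F l1 t + y * (F l1 t - F l2 t)) by ring.
    eapply Rle_trans; [apply Rabs_triang|]. rewrite !Rabs_mult.
    pose proof (F_le_pow l1 t). pose proof (F_nonneg l1 t).
    pose proof (cdist_nonneg (cexp_i t) (cexp_i b)). pose proof (cdist_circle_le2 t b).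
    rewrite (Rabs_right (F l1 t)) by lra. rewrite (Rabs_right y) by (unfold y; lra).
    specialize (IH l2 Hl t). pose proof (Rabs_pos (x - y)). pose proof (Rabs_pos (F l1 t - F l2 t)).
    pose proof (sumd_nonneg l1 l2). pose proof (pow_le 2 (length l1) ltac:(lra)).
    assert (Rabs (x - y) * F l1 t <= cdist (cexp_i a) (cexp_i b) * 2 ^ length l1).
    { apply Rmult_le_compat; auto. }
    assert (y * Rabs (F l1 t - F l2 t) <= 2 * (2 ^ length l1 * sumd l1 l2)).
    { apply Rmult_le_compat; auto; unfold y; lra. }
    assert (0 <= cdist (cexp_i a) (cexp_i b) * 2 ^ length l1) by (apply Rmult_le_pos; auto; apply cdist_nonneg).
    nra.
Qed.

Definition red (th : R) : R := th - 2 * PI * IZR (up (th / (2 * PI)) - 1).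

Lemma sinZ : forall x (j : Z), sin (x + 2 * PI * IZR j) = sin x.
Proof.
  intros x j. destruct (Z.le_gt_cases 0 j) as [Hj|Hj].
  - destruct (Z_of_nat_complete _ Hj) as [n ->]. rewrite <- INR_IZR_INZ.
    replace (2 * PI * INR n) with (2 * INR n * PI) by ring. apply sin_period.
  - assert (Hj' : (0 <= - j)%Z) by lia. destruct (Z_of_nat_complete _ Hj') as [n En].
    replace j with (- Z.of_nat n)%Z by lia. rewrite opp_IZR, <- INR_IZR_INZ.
    rewrite <- (sin_period (x + 2 * PI * - INR n) n). f_equal. ring.
Qed.

Lemma red_range : forall th, 0 <= red th < 2 * PI.
Proof.
  intros th. unfold red. pose proof PI_RGT_0. rewrite minus_IZR.
  pose proof (archimed (th / (2 * PI))) as [H1 H2]. simpl.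
  set (u := IZR (up (th / (2 * PI)))) in *.
  assert (E : th = (th / (2 * PI)) * (2 * PI)) by (field; lra).
  split.
  - assert (H3 : th / (2 * PI) >= u - 1) by lra.
    apply Rmult_ge_compat_r with (r := 2 * PI) in H3; [|lra]. lra.
  - apply Rmult_lt_compat_r with (r := 2 * PI) in H1; [|lra]. lra.
Qed.

Lemma cexp_red : forall th, cexp_i (red th) = cexp_i th.
Proof.
  intros th. unfold red, cexp_i.
  replace (th - 2 * PI * IZR (up (th / (2 * PI)) - 1)) with (th + 2 * PI * IZR (- (up (th / (2 * PI)) - 1))) by (rewrite opp_IZR; ring).
  rewrite cosZ, sinZ. reflexivity.
Qed.

Lemma F_red : forall ths t, F (map red ths) t = F ths t.
Proof.
  induction ths as [|th ths IH]; intros t; unfold F in *; simpl; auto. rewrite cexp_red, IH. reflexivity.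
Qed.

Lemma extract1 : forall (u : nat -> R), (forall n, 0 <= u n <= 2 * PI) ->
  exists phi : nat -> nat, (forall n, (phi n < phi (S n))%nat) /\ exists l, Un_cv (fun n => u (phi n)) l.
Proof.
  intros u Hu.
  destruct (Bolzano_Weierstrass u (fun x => 0 <= x <= 2 * PI) (compact_P3 _ _) Hu) as [l Hl].
  assert (Hch : forall N k, exists p, (N <= p)%nat /\ Rabs (u p - l) < / (INR k + 1)).
  { intros N k. assert (Hd : 0 < / (INR k + 1)) by (apply Rinv_0_lt_compat; pose proof (pos_INR k); lra).
    assert (Hnb : neighbourhood (disc l (mkposreal _ Hd)) l) by (exists (mkposreal _ Hd); intros y Hy; auto).
    destruct (Hl (disc l (mkposreal _ Hd)) N Hnb) as [p [Hp Hv]].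
    exists p. split; auto. }
  set (pick := fun N k => proj1_sig (constructive_indefinite_description _ (Hch N k))).
  assert (Hpick : forall N k, (N <= pick N k)%nat /\ Rabs (u (pick N k) - l) < / (INR k + 1)).
  { intros N k. unfold pick. apply (proj2_sig (constructive_indefinite_description _ (Hch N k))). }
  set (phi := fix phi n := match n with O => pick O O | S n => pick (S (phi n)) (S n) end).
  exists phi. split.
  - intros n. simpl. destruct (Hpick (S (phi n)) (S n)). lia.
  - exists l. intros eps Heps.
    destruct (INR_unbounded (/ eps)) as [N HN].
    exists N. intros n Hn. unfold Rdist.
    assert (Hphi : Rabs (u (phi n) - l) < / (INR n + 1)).
    { destruct n; simpl; apply Hpick. }
    eapply Rlt_le_trans; [apply Hphi|].
    assert (INR N <= INR n) by (apply le_INR; lia).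
    assert (0 < / eps) by (apply Rinv_0_lt_compat; auto).
    rewrite <- (Rinv_inv eps). apply Rinv_le_contravar; lra.
Qed.

Lemma phi_ge : forall phi : nat -> nat, (forall n, (phi n < phi (S n))%nat) -> forall n, (n <= phi n)%nat.
Proof. intros phi H n; induction n; [lia|]. specialize (H n). lia. Qed.

Lemma cv_sub : forall (v : nat -> R) l (phi : nat -> nat), (forall n, (phi n < phi (S n))%nat) ->
  Un_cv v l -> Un_cv (fun n => v (phi n)) l.
Proof.
  intros v l phi Hphi Hv eps Heps. destruct (Hv eps Heps) as [N HN]. exists N.
  intros n Hn. apply HN. pose proof (phi_ge phi Hphi n). lia.
Qed.

Lemma extract_list : forall m (u : nat -> list R),
  (forall n, length (u n) = m /\ forall x, In x (u n) -> 0 <= x <= 2 * PI) ->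
  exists phi : nat -> nat, (forall n, (phi n < phi (S n))%nat) /\
    exists l, length l = m /\ Un_cv (fun n => sumd (u (phi n)) l) 0.
Proof.
  induction m as [|m IH]; intros u Hu.
  - exists (fun n => n). split; [intros; lia|]. exists []. split; auto.
    intros eps Heps. exists O. intros n _. destruct (Hu n) as [Hl _].
    destruct (u n); simpl in Hl; [|lia]. simpl. unfold Rdist. rewrite Rminus_diag, Rabs_R0. auto.
  - destruct (IH (fun n => tl (u n))) as [phi1 [Hphi1 [l1 [Hl1 Hcv1]]]].
    { intros n. destruct (Hu n) as [Hl Hx]. destruct (u n) as [|a r]; simpl in Hl; [lia|].
      simpl. split; [lia|]. intros; apply Hx; simpl; auto. }
    destruct (extract1 (fun n => hd 0 (u (phi1 n)))) as [phi2 [Hphi2 [a Hcva]]].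
    { intros n. destruct (Hu (phi1 n)) as [Hl Hx]. destruct (u (phi1 n)) as [|b r]; simpl in Hl; [lia|].
      simpl. apply Hx; simpl; auto. }
    exists (fun n => phi1 (phi2 n)). split.
    { intros n. assert (forall a b, (a < b)%nat -> (phi1 a < phi1 b)%nat).
      { intros x y Hxy. induction Hxy; [apply Hphi1|]. specialize (Hphi1 m0). lia. }
      apply H. apply Hphi2. }
    exists (a :: l1). split; [simpl; lia|].
    assert (Hcva' : Un_cv (fun n => cdist (cexp_i (hd 0 (u (phi1 (phi2 n))))) (cexp_i a)) 0).
    { set (g := fun x => cdist (cexp_i x) (cexp_i a)).
      assert (Hg : continuity_pt g a).
      { unfold g, cdist, cexp_i; simpl.
        apply (continuity_pt_comp (fun t => (cos t - cos a) ^ 2 + (sin t - sin a) ^ 2) sqrt).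
        + apply continuity_plus; apply cont_sq; apply continuity_minus;
            try apply cont_const; [apply continuity_cos|apply continuity_sin].
        + apply continuity_pt_sqrt. apply Rplus_le_le_0_compat; apply pow2_ge_0. }
      pose proof (continuity_seq g _ a Hg Hcva) as Hs.
      assert (E : g a = 0) by (unfold g, cdist, cexp_i; simpl; rewrite !Rminus_diag; simpl; rewrite Rmult_0_l, Rplus_0_r, sqrt_0; reflexivity).
      rewrite E in Hs. exact Hs. }
    assert (Hcv1' : Un_cv (fun n => sumd (tl (u (phi1 (phi2 n)))) l1) 0).
    { apply (cv_sub (fun n => sumd (tl (u (phi1 n))) l1)); auto. }
    eapply Un_cv_ext; [|replace 0 with (0 + 0) by ring; apply (CV_plus _ _ _ _ Hcva' Hcv1')].
    intros n. simpl. destruct (Hu (phi1 (phi2 n))) as [Hl _].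
    destruct (u (phi1 (phi2 n))) as [|b r]; simpl in Hl; [lia|]. simpl. reflexivity.
Qed.

Definition Es (m : nat) (alpha : R) : R -> Prop :=
  fun v => exists Q, compact_in_circle Q /\ arc_measure Q (2 * alpha) /\ E_Q m Q v.

Lemma arc_mu : forall Q r, arc_measure Q r -> mu (fun t => 0 <= t < 2 * PI /\ Q (cexp_i t)) = r.
Proof. intros Q r H. apply mu_unique. exact H. Qed.

Lemma gen_lt : forall m alpha hs, (1 <= m)%nat -> 0 < alpha -> E_alpha m alpha hs ->
  forall ths, length ths = m -> forall h, 2 * alpha < mu (fun t => 0 <= t < 2 * PI /\ F ths t < h) -> hs < h.
Proof.
  intros m alpha hs Hm Ha Hhs ths Hl h Hlt.
  destruct (zero_list ths h ltac:(lia)) as [Z HZ].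
  destruct (inner_closed (F ths) h Z (F_cont ths) HZ (2 * alpha) Hlt) as [K [HK [HKb [HKf HKmu]]]].
  destruct (cut_exact K (2 * alpha) HK ltac:(intros t Kt; specialize (HKb t Kt); lra) ltac:(lra) HKmu) as [s Hs].
  set (K' := fun t => K t /\ t <= s).
  assert (HK' : closed_set K') by (apply closed_inter; auto; apply closed_le_id).
  assert (HK'b : forall t, K' t -> 0 <= t < 2 * PI) by (intros t [Kt _]; auto).
  assert (HK'ne : exists t, K' t).
  { apply NNPP. intro Hn. rewrite mu_empty in Hs; [lra|]. intros t Kt. apply Hn; eauto. }
  destruct (E_Q_exists m K' ths HK' HK'b HK'ne Hl) as [e [He [_ [t0 [Kt0 Het0]]]]].
  assert (hs <= e).
  { destruct Hhs as [Hlb _]. apply Hlb. exists (Qof K'). split; [apply Qof_compact; auto|].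
    split; auto. rewrite <- Hs. apply Qof_arc; auto. }
  destruct Kt0 as [Kt0 _]. specialize (HKf t0 Kt0). lra.
Qed.

Lemma exists_h : forall m alpha, (1 <= m)%nat -> 0 < alpha < PI -> exists h, E_alpha m alpha h.
Proof.
  intros m alpha Hm Ha. unfold E_alpha. apply glb_exists.
  - set (K := fun t => 0 <= t <= 2 * alpha).
    assert (HKb : forall t, K t -> 0 <= t < 2 * PI) by (intros t Ht; unfold K in Ht; lra).
    destruct (E_Q_exists m K (repeat 0 m) (closed_interval _ _) HKb ltac:(exists 0; unfold K; lra) (repeat_length _ _))
      as [e [He _]].
    exists e, (Qof K). split; [apply Qof_compact; auto; apply closed_interval|]. split; auto.
    replace (2 * alpha) with (mu K); [apply Qof_arc; auto|].
    apply Rle_antisym.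
    + assert (mu K <= 2 * alpha - 0) by (apply mu_le_interval; [lra|auto]). lra.
    + assert (2 * alpha - 0 <= mu K) by (apply mu_ge_interval; auto; exists 0, (2 * alpha); auto). lra.
  - exists 0. intros v [Q [_ [_ [_ Hglb]]]]. apply Hglb.
    intros w [ths [_ [[z [_ ->]] _]]]. apply Pabs_nonneg.
Qed.

Lemma hs_pos : forall m alpha hs, (1 <= m)%nat -> 0 < alpha -> E_alpha m alpha hs -> 0 < hs.
Proof.
  intros m alpha hs Hm Ha Hhs.
  destruct (small_sub m Hm alpha Ha) as [r [Hr Hsmall]].
  assert (r <= hs); [|lra].
  destruct Hhs as [_ Hg]. apply Hg. intros v [Q [HQ [Harc [_ HEg]]]]. apply HEg.
  intros w [ths [Hl [Hw Hmax]]]. apply Rnot_lt_le. intro Hwr.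
  assert (mu (fun t => 0 <= t < 2 * PI /\ Q (cexp_i t)) <= mu (fun t => 0 <= t < 2 * PI /\ F ths t < r)).
  { apply mu_mono; [apply Bdd_int2|]. intros t [Ht Qt]. split; auto.
    assert (F ths t <= w) by (apply Hmax; exists (cexp_i t); auto). lra. }
  rewrite (arc_mu Q (2 * alpha) Harc) in H. specialize (Hsmall ths Hl). lra.
Qed.

Lemma hs_lt2 : forall m alpha hs, (1 <= m)%nat -> 0 < alpha < PI -> E_alpha m alpha hs -> hs < 2.
Proof.
  intros m alpha hs Hm Ha Hhs.
  apply (gen_lt m alpha hs Hm ltac:(lra) Hhs (ths0 m) (ths0_length m)).
  destruct (zero_list (ths0 m) 2 ltac:(rewrite ths0_length; lia)) as [Z HZ].
  assert (2 * PI <= mu (fun t => 0 <= t < 2 * PI /\ F (ths0 m) t < 2)); [|lra].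
  eapply Rle_trans; [apply mu_T_ge|].
  eapply Rle_trans; [apply (mu_mono _ (fun t => (0 <= t < 2 * PI /\ F (ths0 m) t < 2) \/ In t Z))|].
  - apply Bdd_union; [apply Bdd_int2|]. clear. induction Z as [|z Z IH]. + exists 0, 0; intros y [].
    + destruct IH as [lo [hi H]]. exists (Rmin z lo), (Rmax z hi). intros y [E|Hy].
      * subst z. pose proof (Rmin_l y lo); pose proof (Rmax_l y hi); lra.
      * specialize (H y Hy). pose proof (Rmin_r z lo); pose proof (Rmax_r z hi); lra.
  - intros t Ht. pose proof (ths0_le2 m Hm t). destruct (Rlt_dec (F (ths0 m) t) 2) as [Hlt|Hlt]; [left; auto|right].
    apply HZ; [lra|]. unfold F in *. lra.
  - eapply Rle_trans; [apply mu_union; [apply Bdd_int2|]|].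
    + clear. induction Z as [|z Z IH]. * exists 0, 0; intros y [].
      * destruct IH as [lo [hi H]]. exists (Rmin z lo), (Rmax z hi). intros y [E|Hy].
        -- subst z. pose proof (Rmin_l y lo); pose proof (Rmax_l y hi); lra.
        -- specialize (H y Hy). pose proof (Rmin_r z lo); pose proof (Rmax_r z hi); lra.
    + rewrite mu_finite. lra.
Qed.

Lemma delta_lb : forall m alpha hs, (1 <= m)%nat -> 0 < alpha -> E_alpha m alpha hs ->
  forall ths, length ths = m -> 2 * PI - 2 * alpha <= mu (fun t => 0 <= t < 2 * PI /\ F ths t >= hs).
Proof.
  intros m alpha hs Hm Ha Hhs ths Hl. apply Rnot_lt_le. intro Hlt.
  assert (2 * alpha < mu (fun t => 0 <= t < 2 * PI /\ F ths t < hs)).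
  { assert (2 * PI <= mu (fun t => 0 <= t < 2 * PI /\ F ths t < hs) + mu (fun t => 0 <= t < 2 * PI /\ F ths t >= hs)); [|lra].
    eapply Rle_trans; [apply mu_T_ge|].
    eapply Rle_trans; [|apply mu_union; apply Bdd_int2].
    apply mu_mono; [apply Bdd_union; apply Bdd_int2|].
    intros t Ht. destruct (Rlt_dec (F ths t) hs); [left|right]; split; auto; lra. }
  pose proof (gen_lt m alpha hs Hm Ha Hhs ths Hl hs H). lra.
Qed.

Lemma approx_seq : forall m alpha hs, (1 <= m)%nat -> 0 < alpha -> E_alpha m alpha hs ->
  forall n : nat, exists ths, (length ths = m /\ forall x, In x ths -> 0 <= x <= 2 * PI) /\
    2 * alpha <= mu (fun t => 0 <= t < 2 * PI /\ F ths t <= hs + / (INR n + 1)).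
Proof.
  intros m alpha hs Hm Ha Hhs n.
  assert (Hn : 0 < / (INR n + 1)) by (apply Rinv_0_lt_compat; pose proof (pos_INR n); lra).
  destruct (glb_approx _ _ Hhs (/ (INR n + 1) / 2) ltac:(lra)) as [v [[Q [HQ [Harc HEQ]]] Hv]].
  destruct (glb_approx _ _ HEQ (/ (INR n + 1) / 2) ltac:(lra)) as [w [[ths [Hl [_ Hmax]]] Hw]].
  exists (map red ths). split.
  - split; [rewrite length_map; auto|]. intros x Hx. apply in_map_iff in Hx. destruct Hx as [y [<- _]].
    pose proof (red_range y). lra.
  - rewrite <- (arc_mu Q (2 * alpha) Harc). apply mu_mono; [apply Bdd_int2|].
    intros t [Ht Qt]. split; auto. rewrite F_red.
    assert (F ths t <= w) by (apply Hmax; exists (cexp_i t); auto). lra.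
Qed.

Lemma delta_attained : forall m alpha hs, (1 <= m)%nat -> 0 < alpha -> E_alpha m alpha hs ->
  exists ths, length ths = m /\ mu (fun t => 0 <= t < 2 * PI /\ F ths t >= hs) <= 2 * PI - 2 * alpha.
Proof.
  intros m alpha hs Hm Ha Hhs.
  set (u := fun n => proj1_sig (constructive_indefinite_description _ (approx_seq m alpha hs Hm Ha Hhs n))).
  assert (Hu : forall n, (length (u n) = m /\ forall x, In x (u n) -> 0 <= x <= 2 * PI) /\
                 2 * alpha <= mu (fun t => 0 <= t < 2 * PI /\ F (u n) t <= hs + / (INR n + 1))).
  { intro n. unfold u. exact (proj2_sig (constructive_indefinite_description _ (approx_seq m alpha hs Hm Ha Hhs n))). }
  destruct (extract_list m u (fun n => proj1 (Hu n))) as [phi [Hphi [l [Hl Hcv]]]].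
  exists l. split; auto.
  destruct (zero_list l hs ltac:(lia)) as [Z HZ].
  apply (level_ge_bound (F l) (F_cont l) hs Z HZ (2 * alpha)).
  intros eta Heta.
  assert (Hp : 0 < 2 ^ m) by (apply pow_lt; lra).
  destruct (Hcv (eta / 2 / 2 ^ m) ltac:(apply Rdiv_lt_0_compat; lra)) as [N1 HN1].
  destruct (INR_unbounded (2 / eta)) as [N2 HN2].
  set (n := max N1 N2).
  destruct (Hu (phi n)) as [[Hln _] Hmu].
  eapply Rle_trans; [apply Hmu|]. apply mu_mono; [apply Bdd_int2|].
  intros t [Ht Hft]. split; auto.
  pose proof (F_unif (u (phi n)) l ltac:(congruence) t) as Hun.
  specialize (HN1 n ltac:(unfold n; lia)). unfold Rdist in HN1. rewrite Rminus_0_r in HN1.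
  rewrite Rabs_right in HN1 by (apply Rle_ge, sumd_nonneg).
  rewrite Hln in Hun.
  assert (Hs : 2 ^ m * sumd (u (phi n)) l <= eta / 2).
  { apply Rmult_le_reg_r with (/ 2 ^ m); [apply Rinv_0_lt_compat; auto|].
    rewrite Rmult_comm, <- Rmult_assoc, Rinv_l, Rmult_1_l by lra. unfold Rdiv in HN1. lra. }
  assert (Hinv : / (INR (phi n) + 1) <= eta / 2).
  { pose proof (phi_ge phi Hphi n). assert (INR N2 <= INR (phi n)) by (apply le_INR; unfold n in *; lia).
    assert (2 / eta < INR (phi n) + 1) by lra.
    replace (eta / 2) with (/ (2 / eta)) by (field; lra).
    apply Rinv_le_contravar; [apply Rdiv_lt_0_compat; lra|lra]. }
  pose proof (Rle_abs (F (u (phi n)) t - F l t)). pose proof (Rabs_minus_sym (F (u (phi n)) t) (F l t)). pose proof (Rle_abs (F l t - F (u (phi n)) t)). lra.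
Qed.

Lemma delta_main : forall m alpha hs, (1 <= m)%nat -> 0 < alpha -> E_alpha m alpha hs ->
  delta m hs (2 * PI - 2 * alpha).
Proof.
  intros m alpha hs Hm Ha Hhs. split.
  - intros v [ths [Hl Hv]]. rewrite <- (mu_unique _ _ Hv). apply (delta_lb m alpha hs Hm Ha Hhs ths Hl).
  - intros b Hb. destruct (delta_attained m alpha hs Hm Ha Hhs) as [ths [Hl Hmu]].
    eapply Rle_trans; [|apply Hmu]. apply Hb. exists ths. split; auto. apply mu_spec, Bdd_int2.
Qed.

Theorem theorem3 (m : nat) (alpha : R) :
  (1 <= m)%nat -> 0 < alpha < PI ->
  (exists h, E_alpha m alpha h) /\
  (forall h, E_alpha m alpha h ->
     0 < h < 2 /\ delta m h (2 * PI - 2 * alpha)).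
Proof.
  intros Hm Ha. split; [apply exists_h; auto|].
  intros h Hh. split; [split|].
  - apply (hs_pos m alpha h Hm ltac:(lra) Hh).
  - apply (hs_lt2 m alpha h Hm Ha Hh).
  - apply (delta_main m alpha h Hm ltac:(lra) Hh).
Qed.
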